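(* Let $f\in\mathcal{B}$ satisfy $\|f-f_0\|_{\mathcal{B}}<\frac14$, where $f_0=10\cosh-12$. Then $f\colon\mathbb{D}\to f(\mathbb{D})$ is a quadratic-like map and $f(0)\in(-\infty,-1)$.
   Context: $\mathcal{B}$ is the real Banach space of real and even entire maps $f$ (i.e. $f(\bar z)=\overline{f(z)}$, $f(-z)=f(z)$) such that the sequence $(f^{(j)}(0))_{j\ge0}$ is bounded, with norm $\|f\|_{\mathcal{B}}=\sup_{j\ge0}|f^{(j)}(0)|$; $f_0$ is the map $z\mapsto10\cosh(z)-12$. $\mathbb{D}$ is the open unit disk. A quadratic-like map is a holomorphic proper map $f\colon V\to W$ of degree $2$, where $V,W$ are nonempty simply connected open subsets of $\mathbb{C}$ with $V$ relatively compact in $W$. *)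

(* Defs.v *)
From Stdlib Require Import Reals Lra List.
From Coquelicot Require Import Coquelicot.
Open Scope R_scope.

Definition Cderiv (f : C -> C) (z l : C) : Prop :=
  @is_derive C_AbsRing C_NormedModule f z l.

Definition entire (f : C -> C) : Prop := forall z, exists l, Cderiv f z l.

Definition derivs_on (U : C -> Prop) (f : C -> C) (d : nat -> C -> C) : Prop :=
  (forall z, U z -> d O z = f z) /\
  (forall n z, U z -> Cderiv (d n) z (d (S n) z)).

Definition Cplane : C -> Prop := fun _ => True.

Definition in_B (f : C -> C) : Prop :=
  entire f /\
  (forall z, f (Cconj z) = Cconj (f z)) /\
  (forall z, f (Copp z) = f z) /\
  exists d, derivs_on Cplane f d /\ exists M, forall j, Cmod (d j 0%C) <= M.

Definition B_norm (g : C -> C) : Rbar :=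
  Lub_Rbar (fun x => exists d, derivs_on Cplane g d /\ exists j, x = Cmod (d j 0%C)).

Definition cexp (z : C) : C := (exp (fst z) * cos (snd z), exp (fst z) * sin (snd z)).
Definition ccosh (z : C) : C := Cdiv (Cplus (cexp z) (cexp (Copp z))) (RtoC 2).

Definition f0 (z : C) : C := Cminus (Cmult (RtoC 10) (ccosh z)) (RtoC 12).

Definition unit_disk : C -> Prop := fun z => Cmod z < 1.
Definition image_of (f : C -> C) (V : C -> Prop) : C -> Prop :=
  fun w => exists z, V z /\ f z = w.

Definition openC (U : C -> Prop) : Prop :=
  forall z, U z -> exists e, 0 < e /\ forall y, Cmod (Cminus y z) < e -> U y.
Definition closureC (U : C -> Prop) : C -> Prop :=
  fun z => forall e, 0 < e -> exists y, U y /\ Cmod (Cminus y z) < e.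
Definition compactC (K : C -> Prop) : Prop :=
  forall (I : Type) (O : I -> C -> Prop),
    (forall i, openC (O i)) -> (forall z, K z -> exists i, O i z) ->
    exists l : list I, forall z, K z -> exists i, In i l /\ O i z.
Definition nonemptyC (U : C -> Prop) : Prop := exists z, U z.

Definition I01 (t : R) : Prop := 0 <= t <= 1.
Definition path_in (U : C -> Prop) (g : R -> C) : Prop :=
  (forall t, I01 t -> U (g t)) /\
  (forall t e, I01 t -> 0 < e -> exists dl, 0 < dl /\
     forall t', I01 t' -> Rabs (t' - t) < dl -> Cmod (Cminus (g t') (g t)) < e).
Definition homotopy_in (U : C -> Prop) (H : R -> R -> C) : Prop :=
  (forall s t, I01 s -> I01 t -> U (H s t)) /\
  (forall s t e, I01 s -> I01 t -> 0 < e -> exists dl, 0 < dl /\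
     forall s' t', I01 s' -> I01 t' -> Rabs (s' - s) < dl -> Rabs (t' - t) < dl ->
       Cmod (Cminus (H s' t') (H s t)) < e).

Definition path_connectedC (U : C -> Prop) : Prop :=
  forall a b, U a -> U b -> exists g, path_in U g /\ g 0 = a /\ g 1 = b.

(** Simply connected: path-connected and every loop is (freely, through loops)
    homotopic in U to a constant loop. *)
Definition simply_connectedC (U : C -> Prop) : Prop :=
  path_connectedC U /\
  forall g, path_in U g -> g 0 = g 1 ->
    exists H, homotopy_in U H /\
      (forall t, I01 t -> H 0 t = g t) /\
      (forall t, I01 t -> H 1 t = H 1 0) /\
      (forall s, I01 s -> H s 0 = H s 1).

(** Multiplicity of z as a solution of f(z) = f(z0): the least k >= 1 with f^(k)(z) <> 0. *)
Definition multiplicity_on (V : C -> Prop) (f : C -> C) (z : C) (k : nat) : Prop :=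
  (1 <= k)%nat /\ exists d, derivs_on V f d /\ d k z <> 0%C /\
    (forall j, (1 <= j < k)%nat -> d j z = 0%C).

Definition degree2_on (V W : C -> Prop) (f : C -> C) : Prop :=
  forall w, W w -> exists l : list (C * nat),
    NoDup (map fst l) /\
    (forall z, In z (map fst l) <-> (V z /\ f z = w)) /\
    (forall p, In p l -> multiplicity_on V f (fst p) (snd p)) /\
    fold_right Nat.add O (map snd l) = 2%nat.

Definition holomorphic_on (V : C -> Prop) (f : C -> C) : Prop :=
  forall z, V z -> exists l, Cderiv f z l.

Definition proper_on (V W : C -> Prop) (f : C -> C) : Prop :=
  forall K, compactC K -> (forall w, K w -> W w) -> compactC (fun z => V z /\ K (f z)).

Definition quadratic_like (f : C -> C) (V W : C -> Prop) : Prop :=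
  nonemptyC V /\ nonemptyC W /\ openC V /\ openC W /\
  simply_connectedC V /\ simply_connectedC W /\
  compactC (closureC V) /\ (forall z, closureC V z -> W z) /\
  (forall z, V z -> W (f z)) /\
  holomorphic_on V f /\ proper_on V W f /\ degree2_on V W f.

(* Main.v *)
Require Import Defs.
From Stdlib Require Import Reals Lra Lia List ClassicalEpsilon Classical FunctionalExtensionality.
From Coquelicot Require Import Coquelicot.
Open Scope R_scope.

Lemma im_le_Cmod (c : C) : Rabs (Im c) <= Cmod c.
Proof.
  unfold Cmod. rewrite <- sqrt_Rsqr_abs. apply sqrt_le_1_alt.
  unfold Rsqr. simpl. destruct c as [x y]; simpl. nra.
Qed.

Lemma Cmod_le_sum (c : C) : Cmod c <= Rabs (Re c) + Rabs (Im c).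
Proof.
  destruct c as [x y]. unfold Cmod; simpl.
  apply Rsqr_incr_0_var.
  - rewrite Rsqr_sqrt by nra. unfold Rsqr.
    pose proof (Rabs_pos x); pose proof (Rabs_pos y).
    assert (x*x = Rabs x * Rabs x) by (rewrite <- Rabs_mult; rewrite Rabs_right; nra).
    assert (y*y = Rabs y * Rabs y) by (rewrite <- Rabs_mult; rewrite Rabs_right; nra).
    nra.
  - pose proof (Rabs_pos x); pose proof (Rabs_pos y). lra.
Qed.

Lemma locally_C_iff (z : C) (P : C -> Prop) :
  locally z P <-> exists e, 0 < e /\ forall y, Cmod (Cminus y z) < e -> P y.
Proof.
  split.
  - intros [e He]. exists e. split; [apply cond_pos|].
    intros y Hy. apply He. split.
    + eapply Rle_lt_trans; [|exact Hy].
      change (Rabs (fst y - fst z) <= Cmod (Cminus y z)).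
      replace (fst y - fst z) with (Re (Cminus y z)) by (destruct y, z; simpl; ring).
      apply re_le_Cmod.
    + eapply Rle_lt_trans; [|exact Hy].
      change (Rabs (snd y - snd z) <= Cmod (Cminus y z)).
      replace (snd y - snd z) with (Im (Cminus y z)) by (destruct y, z; simpl; ring).
      apply im_le_Cmod.
  - intros [e [He H]]. exists (mkposreal (e/2) ltac:(lra)).
    intros y [H1 H2]. apply H. simpl in H1, H2.
    eapply Rle_lt_trans; [apply Cmod_le_sum|].
    unfold ball in H1, H2; simpl in H1, H2. unfold AbsRing_ball, abs, minus, plus, opp in H1, H2; simpl in H1, H2.
    destruct y, z; simpl in *. lra.
Qed.

Lemma locally_CA_iff (z : C) (P : C -> Prop) :
  @locally (AbsRing_UniformSpace C_AbsRing) z P <-> exists e, 0 < e /\ forall y, Cmod (Cminus y z) < e -> P y.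
Proof.
  split.
  - intros [e He]. exists e. split; [apply cond_pos|]. intros y Hy. apply He. exact Hy.
  - intros [e [He H]]. exists (mkposreal e He). intros y Hy. apply H. exact Hy.
Qed.

Lemma Cderiv_eps (f : C -> C) (z l : C) : Cderiv f z l ->
  forall eps, 0 < eps -> exists del, 0 < del /\ forall y, Cmod (Cminus y z) < del ->
    Cmod (Cminus (Cminus (f y) (f z)) (Cmult (Cminus y z) l)) <= eps * Cmod (Cminus y z).
Proof.
  intros [_ H] eps Heps.
  specialize (H z (fun P HP => HP) (mkposreal eps Heps)).
  apply locally_CA_iff in H. destruct H as [d [Hd H]]. exists d. split; auto.
Qed.

Lemma eps_Cderiv (f : C -> C) (z l : C) :
  (forall eps, 0 < eps -> exists del, 0 < del /\ forall y, Cmod (Cminus y z) < del ->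
    Cmod (Cminus (Cminus (f y) (f z)) (Cmult (Cminus y z) l)) <= eps * Cmod (Cminus y z)) ->
  Cderiv f z l.
Proof.
  intros H. split.
  - apply is_linear_scal_l.
  - intros x Hx. apply (@is_filter_lim_locally_unique C_AbsRing (AbsRing_NormedModule C_AbsRing)) in Hx. subst x.
    intros eps. apply locally_CA_iff. destruct (H eps (cond_pos eps)) as [d [Hd Hd']].
    exists d; split; auto.
Qed.

Lemma is_derive_cont (g : R -> R) t l : is_derive g t l -> continuity_pt g t.
Proof.
  intros H. apply derivable_continuous_pt. exists l. apply is_derive_Reals. exact H.
Qed.

Lemma MVT_bound (g dg : R -> R) x y M :
  (forall t, is_derive g t (dg t)) ->
  (forall t, Rmin x y <= t <= Rmax x y -> Rabs (dg t) <= M) ->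
  Rabs (g y - g x) <= M * Rabs (y - x).
Proof.
  intros Hd Hb.
  destruct (MVT_gen g x y dg) as [c [Hc He]].
  - intros t _. apply Hd.
  - intros t _. eapply is_derive_cont, Hd.
  - rewrite He, Rabs_mult. apply Rmult_le_compat_r; [apply Rabs_pos|]. apply Hb. exact Hc.
Qed.

Lemma Taylor2_R (g dg ddg : R -> R) x y M :
  (forall t, is_derive g t (dg t)) ->
  (forall t, is_derive dg t (ddg t)) ->
  (forall t, Rmin x y <= t <= Rmax x y -> Rabs (ddg t) <= M) ->
  Rabs (g y - g x - dg x * (y - x)) <= M * (y - x)^2.
Proof.
  intros H1 H2 Hb.
  assert (HM : 0 <= M) by (specialize (Hb x); eapply Rle_trans; [apply Rabs_pos|apply Hb];
    split; [apply Rmin_l|apply Rmax_l]).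
  set (h := fun t => g t - dg x * t).
  assert (Hh : forall t, is_derive h t (dg t - dg x)).
  { intros t. unfold h. apply (is_derive_minus g (fun t => dg x * t)). apply H1.
    assert (Hs : is_derive (fun t => dg x * t) t (dg x * 1)) by (apply is_derive_scal; apply (is_derive_id t)).
    rewrite Rmult_1_r in Hs. exact Hs. }
  assert (B : Rabs (h y - h x) <= (M * Rabs (y - x)) * Rabs (y - x)).
  { apply MVT_bound with (dg := fun t => dg t - dg x). apply Hh.
    intros t Ht. eapply Rle_trans. apply (MVT_bound dg ddg x t M H2).
    intros s Hs. apply Hb. revert Ht Hs. unfold Rmin, Rmax.
    repeat destruct Rle_dec; intros; lra.
    apply Rmult_le_compat_l; auto. revert Ht; unfold Rmin, Rmax.
    unfold Rabs; repeat destruct Rle_dec; repeat destruct Rcase_abs; intros; lra. }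
  unfold h in B. replace (g y - g x - dg x * (y - x)) with (g y - dg x * y - (g x - dg x * x)) by ring.
  eapply Rle_trans; [exact B|]. rewrite Rmult_assoc, <- Rabs_mult.
  replace ((y - x) * (y - x)) with ((y-x)^2) by ring. rewrite Rabs_right. lra.
  apply Rle_ge, pow2_ge_0.
Qed.

Lemma exp_le3 t : t <= 1 -> exp t <= 3.
Proof. intros H. eapply Rle_trans; [|apply exp_le_3]. destruct (Req_dec t 1); [subst; lra|].
  left; apply exp_increasing; lra. Qed.

Lemma between_bound x y t : Rabs x <= 1 -> Rabs y <= 1 -> Rmin x y <= t <= Rmax x y -> Rabs t <= 1.
Proof. unfold Rmin, Rmax, Rabs; repeat destruct Rle_dec; repeat destruct Rcase_abs; intros; lra. Qed.

Lemma exp_rem a : Rabs a <= 1 -> Rabs (exp a - 1 - a) <= 3 * a^2.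
Proof.
  intros Ha. pose proof (Taylor2_R exp exp exp 0 a 3 is_derive_exp is_derive_exp) as T.
  rewrite exp_0 in T. replace (a - 0) with a in T by ring. replace (1 * a) with a in T by ring.
  apply T. intros t Ht. rewrite Rabs_right by (left; apply exp_pos).
  apply exp_le3. assert (Rabs t <= 1). { apply (between_bound 0 a); auto. rewrite Rabs_R0; lra. }
  unfold Rabs in H; destruct Rcase_abs; lra.
Qed.

Lemma exp_rem1 a : Rabs a <= 1 -> Rabs (exp a - 1) <= 3 * Rabs a.
Proof.
  intros Ha. pose proof (MVT_bound exp exp 0 a 3 is_derive_exp) as T.
  rewrite exp_0 in T. replace (a - 0) with a in T by ring. apply T.
  intros t Ht. rewrite Rabs_right by (left; apply exp_pos).
  apply exp_le3. assert (Rabs t <= 1). { apply (between_bound 0 a); auto. rewrite Rabs_R0; lra. }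
  unfold Rabs in H; destruct Rcase_abs; lra.
Qed.

Lemma is_derive_sin' t : is_derive sin t (cos t).
Proof. apply is_derive_Reals. apply derivable_pt_lim_sin. Qed.
Lemma is_derive_cos' t : is_derive cos t (- sin t).
Proof. apply is_derive_Reals. apply derivable_pt_lim_cos. Qed.
Lemma is_derive_msin t : is_derive (fun x => - sin x) t (- cos t).
Proof. apply (is_derive_opp sin). apply is_derive_sin'. Qed.

Lemma cos_rem b : Rabs (cos b - 1) <= b^2.
Proof.
  pose proof (Taylor2_R cos (fun x => - sin x) (fun x => - cos x) 0 b 1 is_derive_cos' is_derive_msin) as T.
  rewrite cos_0, sin_0 in T. replace (b - 0) with b in T by ring.
  replace (cos b - 1 - - 0 * b) with (cos b - 1) in T by ring. rewrite Rmult_1_l in T. apply T.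
  intros t _. rewrite Rabs_Ropp. apply Rabs_le. apply COS_bound.
Qed.

Lemma sin_rem b : Rabs (sin b - b) <= b^2.
Proof.
  pose proof (Taylor2_R sin cos (fun x => - sin x) 0 b 1 is_derive_sin' is_derive_cos') as T.
  rewrite cos_0, sin_0 in T. replace (b - 0) with b in T by ring.
  replace (sin b - 0 - 1 * b) with (sin b - b) in T by ring. rewrite Rmult_1_l in T. apply T.
  intros t _. rewrite Rabs_Ropp. apply Rabs_le. apply SIN_bound.
Qed.

Lemma sin_abs_le b : Rabs (sin b) <= Rabs b.
Proof.
  pose proof (MVT_bound sin cos 0 b 1 is_derive_sin') as T.
  rewrite sin_0 in T. replace (b - 0) with b in T by ring. replace (sin b - 0) with (sin b) in T by ring.
  rewrite Rmult_1_l in T. apply T. intros t _. apply Rabs_le. apply COS_bound.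
Qed.

Lemma cexp_add a b : cexp (Cplus a b) = Cmult (cexp a) (cexp b).
Proof.
  destruct a as [x1 y1], b as [x2 y2]. unfold cexp, Cplus, Cmult; simpl.
  rewrite exp_plus, cos_plus, sin_plus. f_equal; ring.
Qed.

Lemma sq_le_Cmod2 a (h : C) : Rabs a <= Cmod h -> a^2 <= Cmod h ^2.
Proof. intros H. pose proof (Rabs_pos a). assert (a^2 = Rabs a * Rabs a).
  { rewrite <- Rabs_mult. rewrite Rabs_right; [ring|]. apply Rle_ge. nra. }
  rewrite H1. simpl. nra. Qed.

Lemma cexp_rem (h : C) : Cmod h <= 1 ->
  Cmod (Cminus (Cminus (cexp h) (RtoC 1)) h) <= 10 * Cmod h ^ 2.
Proof.
  intros Hh. pose proof (re_le_Cmod h) as Hre. pose proof (im_le_Cmod h) as Him.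
  destruct h as [a b]. simpl in Hre, Him. set (m := Cmod (a, b)) in *.
  eapply Rle_trans; [apply Cmod_le_sum|]. unfold cexp; simpl.
  replace (exp a * cos b + - (1) + - a) with ((exp a - 1 - a) + exp a * (cos b - 1)) by ring.
  replace (exp a * sin b + - 0 + - b) with ((exp a - 1) * sin b + (sin b - b)) by ring.
  assert (Ha : Rabs a <= 1) by lra.
  pose proof (exp_rem a Ha). pose proof (exp_rem1 a Ha). pose proof (cos_rem b). pose proof (sin_rem b).
  pose proof (sin_abs_le b). pose proof (exp_le3 a ltac:(unfold Rabs in Ha; destruct Rcase_abs; lra)).
  pose proof (exp_pos a).
  pose proof (sq_le_Cmod2 a (a,b) Hre) as Sa. pose proof (sq_le_Cmod2 b (a,b) Him) as Sb. fold m in Sa, Sb.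
  assert (E1 : Rabs (exp a - 1 - a + exp a * (cos b - 1)) <= 3 * m^2 + 3 * m^2).
  { eapply Rle_trans; [apply Rabs_triang|]. rewrite Rabs_mult, (Rabs_right (exp a)) by lra.
    pose proof (Rabs_pos (cos b - 1)). nra. }
  assert (E2 : Rabs ((exp a - 1) * sin b + (sin b - b)) <= 3 * m^2 + m^2).
  { eapply Rle_trans; [apply Rabs_triang|]. rewrite Rabs_mult.
    pose proof (Rabs_pos (exp a - 1)). pose proof (Rabs_pos (sin b)). pose proof (Rabs_pos a).
    pose proof (Rabs_pos b).
    assert (Rabs (exp a - 1) * Rabs (sin b) <= 3 * Rabs a * Rabs b) by
      (apply Rmult_le_compat; nra).
    assert (Rabs a * Rabs b <= m * m) by (apply Rmult_le_compat; auto).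
    simpl in *. nra. }
  simpl in *; lra.
Qed.

Lemma Cderiv_cexp z : Cderiv cexp z (cexp z).
Proof.
  apply eps_Cderiv. intros eps Heps.
  set (K := Cmod (cexp z)). assert (HK : 0 <= K) by apply Cmod_ge_0.
  exists (Rmin 1 (eps / (10 * K + 1))). split.
  { apply Rmin_pos; [lra|]. apply Rdiv_lt_0_compat; lra. }
  intros y Hy. set (h := Cminus y z).
  assert (Ey : y = Cplus z h) by (unfold h; ring). rewrite Ey.
  rewrite cexp_add.
  replace (Cminus (Cplus z h) z) with h by ring.
  replace (Cminus (Cminus (Cmult (cexp z) (cexp h)) (cexp z)) (Cmult h (cexp z)))
    with (Cmult (cexp z) (Cminus (Cminus (cexp h) (RtoC 1)) h)) by ring.
  rewrite Cmod_mult. fold K.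
  assert (H1 : Cmod h <= 1) by (fold h in Hy; pose proof (Rmin_l 1 (eps / (10 * K + 1))); lra).
  assert (H2 : Cmod h <= eps / (10 * K + 1)) by (fold h in Hy; pose proof (Rmin_r 1 (eps / (10 * K + 1))); lra).
  pose proof (cexp_rem h H1). pose proof (Cmod_ge_0 h).
  assert (K * (10 * Cmod h^2) <= eps * Cmod h).
  { assert (Cmod h * (10 * K + 1) <= eps).
    { apply Rmult_le_reg_r with (/ (10 * K + 1)). apply Rinv_0_lt_compat; lra.
      rewrite Rmult_assoc, Rinv_r by lra. rewrite Rmult_1_r. exact H2. }
    simpl. nra. }
  eapply Rle_trans; [|exact H3]. apply Rmult_le_compat_l; auto.
Qed.

Lemma Cderiv_ext f g z l : (forall x, f x = g x) -> Cderiv f z l -> Cderiv g z l.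
Proof.
  intros E H. apply eps_Cderiv. intros eps Heps. destruct (Cderiv_eps f z l H eps Heps) as [d [Hd H']].
  exists d; split; auto. intros y Hy. rewrite <- !E. auto.
Qed.

Lemma Cderiv_plus f g z a b : Cderiv f z a -> Cderiv g z b ->
  Cderiv (fun x => Cplus (f x) (g x)) z (Cplus a b).
Proof. intros H1 H2. exact (@is_derive_plus C_AbsRing C_NormedModule f g z a b H1 H2). Qed.

Lemma Cderiv_minus f g z a b : Cderiv f z a -> Cderiv g z b ->
  Cderiv (fun x => Cminus (f x) (g x)) z (Cminus a b).
Proof. intros H1 H2. exact (@is_derive_minus C_AbsRing C_NormedModule f g z a b H1 H2). Qed.

Lemma Cderiv_const (c z : C) : Cderiv (fun _ => c) z (RtoC 0).
Proof. exact (@is_derive_const C_AbsRing C_NormedModule c z). Qed.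

Lemma Cderiv_id (z : C) : Cderiv (fun x => x) z (RtoC 1).
Proof. apply eps_Cderiv. intros eps Heps. exists 1; split; [lra|]. intros y _.
  replace (Cminus (Cminus y z) (Cmult (Cminus y z) (RtoC 1))) with (RtoC 0) by ring.
  rewrite Cmod_0. pose proof (Cmod_ge_0 (Cminus y z)). nra. Qed.

Lemma Cderiv_scal (c : C) f z a : Cderiv f z a -> Cderiv (fun x => Cmult c (f x)) z (Cmult c a).
Proof.
  intros H. apply eps_Cderiv. intros eps Heps.
  destruct (Cderiv_eps f z a H (eps / (Cmod c + 1))) as [d [Hd H']].
  { apply Rdiv_lt_0_compat; auto. pose proof (Cmod_ge_0 c); lra. }
  exists d; split; auto. intros y Hy.
  replace (Cminus (Cminus (Cmult c (f y)) (Cmult c (f z))) (Cmult (Cminus y z) (Cmult c a)))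
    with (Cmult c (Cminus (Cminus (f y) (f z)) (Cmult (Cminus y z) a))) by ring.
  rewrite Cmod_mult. specialize (H' y Hy). pose proof (Cmod_ge_0 c). pose proof (Cmod_ge_0 (Cminus y z)).
  pose proof (Cmod_ge_0 (Cminus (Cminus (f y) (f z)) (Cmult (Cminus y z) a))).
  eapply Rle_trans. apply Rmult_le_compat_l; [auto|exact H'].
  assert (Cmod c * (eps / (Cmod c + 1)) <= eps).
  { unfold Rdiv. rewrite <- Rmult_assoc. apply Rmult_le_reg_r with (Cmod c + 1); [lra|].
    rewrite Rmult_assoc, Rinv_l by lra. nra. }
  nra.
Qed.

Lemma Cderiv_comp_opp f z a : Cderiv f (Copp z) a -> Cderiv (fun x => f (Copp x)) z (Copp a).
Proof.
  intros H. apply eps_Cderiv. intros eps Heps.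
  destruct (Cderiv_eps f (Copp z) a H eps Heps) as [d [Hd H']].
  exists d; split; auto. intros y Hy.
  assert (E : Cminus (Copp y) (Copp z) = Copp (Cminus y z)) by ring.
  replace (Cminus (Cminus (f (Copp y)) (f (Copp z))) (Cmult (Cminus y z) (Copp a)))
    with (Cminus (Cminus (f (Copp y)) (f (Copp z))) (Cmult (Cminus (Copp y) (Copp z)) a)) by (rewrite E; ring).
  replace (Cmod (Cminus y z)) with (Cmod (Cminus (Copp y) (Copp z))) by (rewrite E, Cmod_opp; auto).
  apply H'. rewrite E, Cmod_opp; auto.
Qed.

Definition csinh (z : C) : C := Cdiv (Cminus (cexp z) (cexp (Copp z))) (RtoC 2).

Lemma Cderiv_cexp_opp z : Cderiv (fun x => cexp (Copp x)) z (Copp (cexp (Copp z))).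
Proof. apply Cderiv_comp_opp. apply Cderiv_cexp. Qed.

Lemma Cderiv_ccosh z : Cderiv ccosh z (csinh z).
Proof.
  unfold ccosh, csinh. unfold Cdiv.
  eapply Cderiv_ext. intros x. rewrite Cmult_comm. reflexivity.
  replace (Cmult (Cminus (cexp z) (cexp (Copp z))) (Cinv (RtoC 2)))
    with (Cmult (Cinv (RtoC 2)) (Cplus (cexp z) (Copp (cexp (Copp z))))) by ring.
  apply Cderiv_scal. apply Cderiv_plus. apply Cderiv_cexp. apply Cderiv_cexp_opp.
Qed.

Lemma Cderiv_csinh z : Cderiv csinh z (ccosh z).
Proof.
  unfold ccosh, csinh. unfold Cdiv.
  eapply Cderiv_ext. intros x. rewrite Cmult_comm. reflexivity.
  replace (Cmult (Cplus (cexp z) (cexp (Copp z))) (Cinv (RtoC 2)))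
    with (Cmult (Cinv (RtoC 2)) (Cminus (cexp z) (Copp (cexp (Copp z))))) by ring.
  apply Cderiv_scal. apply Cderiv_minus. apply Cderiv_cexp. apply Cderiv_cexp_opp.
Qed.

Definition df0 (n : nat) (z : C) : C :=
  match n with
  | O => f0 z
  | S m => if Nat.even m then Cmult (RtoC 10) (csinh z) else Cmult (RtoC 10) (ccosh z)
  end.

Lemma df0_derivs : derivs_on Cplane f0 df0.
Proof.
  split. { intros z _. reflexivity. }
  intros n z _. destruct n as [|m].
  - simpl. unfold f0. replace (Cmult (RtoC 10) (csinh z)) with (Cminus (Cmult (RtoC 10) (csinh z)) (RtoC 0)) by ring.
    apply Cderiv_minus. apply Cderiv_scal, Cderiv_ccosh. apply Cderiv_const.
  - assert (E : Nat.even (S m) = negb (Nat.even m)) by (rewrite Nat.even_succ; reflexivity).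
    unfold df0. rewrite E. destruct (Nat.even m); simpl.
    + apply Cderiv_scal, Cderiv_csinh.
    + apply Cderiv_scal, Cderiv_ccosh.
Qed.

Lemma cexp_0 : cexp (RtoC 0) = RtoC 1.
Proof. unfold cexp; simpl. rewrite exp_0, cos_0, sin_0. unfold RtoC. f_equal; ring. Qed.

Lemma ccosh_0 : ccosh (RtoC 0) = RtoC 1.
Proof. unfold ccosh. replace (Copp (RtoC 0)) with (RtoC 0) by ring. rewrite cexp_0. field. Qed.

Lemma df0_0 : df0 0 (RtoC 0) = RtoC (-2).
Proof. simpl. unfold f0. rewrite ccosh_0. unfold RtoC, Cminus, Cmult, Copp, Cplus; simpl. f_equal; ring. Qed.

Lemma df0_even k : df0 (2 * S k) (RtoC 0) = RtoC 10.
Proof.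
  replace (2 * S k)%nat with (S (S (2 * k))) by lia.
  assert (E : Nat.even (S (2 * k)) = false).
  { rewrite Nat.even_succ. unfold Nat.odd. rewrite Nat.even_mul. reflexivity. }
  unfold df0. rewrite E. rewrite ccosh_0. ring.
Qed.

Definition RD (g : R -> C) (t : R) (l : C) : Prop :=
  forall eps, 0 < eps -> exists del, 0 < del /\ forall s, Rabs (s - t) < del ->
    Cmod (Cminus (Cminus (g s) (g t)) (Cmult (RtoC (s - t)) l)) <= eps * Rabs (s - t).
Definition Ccont (f : C -> C) (z : C) : Prop :=
  forall eps, 0 < eps -> exists del, 0 < del /\ forall y, Cmod (Cminus y z) < del ->
    Cmod (Cminus (f y) (f z)) < eps.
Definition Rcont (g : R -> C) (t : R) : Prop :=
  forall eps, 0 < eps -> exists del, 0 < del /\ forall s, Rabs (s - t) < del ->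
    Cmod (Cminus (g s) (g t)) < eps.

Lemma Cmod_RtoC_mult (r : R) (c : C) : Cmod (Cmult (RtoC r) c) = Rabs r * Cmod c.
Proof. rewrite Cmod_mult, Cmod_R. reflexivity. Qed.

Lemma Cderiv_cont f z l : Cderiv f z l -> Ccont f z.
Proof.
  intros H eps Heps. destruct (Cderiv_eps f z l H 1 ltac:(lra)) as [d [Hd H']].
  set (K := Cmod l + 1). assert (HK : 0 < K) by (unfold K; pose proof (Cmod_ge_0 l); lra).
  exists (Rmin d (eps / K)). split. { apply Rmin_pos; auto. apply Rdiv_lt_0_compat; lra. }
  intros y Hy. specialize (H' y ltac:(eapply Rlt_le_trans; [exact Hy|apply Rmin_l])).
  assert (Hy2 : Cmod (Cminus y z) < eps / K) by (eapply Rlt_le_trans; [exact Hy|apply Rmin_r]).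
  replace (Cminus (f y) (f z)) with (Cplus (Cminus (Cminus (f y) (f z)) (Cmult (Cminus y z) l)) (Cmult (Cminus y z) l)) by ring.
  eapply Rle_lt_trans; [apply Cmod_triangle|]. rewrite Cmod_mult.
  assert (HH : Cmod (Cminus y z) * K < eps).
  { apply Rmult_lt_reg_r with (/ K). apply Rinv_0_lt_compat; lra.
    rewrite Rmult_assoc, Rinv_r by lra. rewrite Rmult_1_r. exact Hy2. }
  unfold K in HH. pose proof (Cmod_ge_0 l). pose proof (Cmod_ge_0 (Cminus y z)). nra.
Qed.

Lemma RD_cont g t l : RD g t l -> Rcont g t.
Proof.
  intros H eps Heps. destruct (H 1 ltac:(lra)) as [d [Hd H']].
  set (K := Cmod l + 1). assert (HK : 0 < K) by (unfold K; pose proof (Cmod_ge_0 l); lra).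
  exists (Rmin d (eps / K)). split. { apply Rmin_pos; auto. apply Rdiv_lt_0_compat; lra. }
  intros s Hs. specialize (H' s ltac:(eapply Rlt_le_trans; [exact Hs|apply Rmin_l])).
  assert (Hy2 : Rabs (s - t) < eps / K) by (eapply Rlt_le_trans; [exact Hs|apply Rmin_r]).
  replace (Cminus (g s) (g t)) with (Cplus (Cminus (Cminus (g s) (g t)) (Cmult (RtoC (s - t)) l)) (Cmult (RtoC (s - t)) l)) by ring.
  eapply Rle_lt_trans; [apply Cmod_triangle|]. rewrite Cmod_RtoC_mult.
  assert (HH : Rabs (s - t) * K < eps).
  { apply Rmult_lt_reg_r with (/ K). apply Rinv_0_lt_compat; lra.
    rewrite Rmult_assoc, Rinv_r by lra. rewrite Rmult_1_r. exact Hy2. }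
  unfold K in HH. pose proof (Cmod_ge_0 l). pose proof (Rabs_pos (s - t)). nra.
Qed.

Lemma Rcont_comp (f : C -> C) (g : R -> C) t : Ccont f (g t) -> Rcont g t -> Rcont (fun s => f (g s)) t.
Proof.
  intros Hf Hg eps Heps. destruct (Hf eps Heps) as [d1 [Hd1 H1]]. destruct (Hg d1 Hd1) as [d2 [Hd2 H2]].
  exists d2; split; auto.
Qed.

Lemma Rcont_plus g h t : Rcont g t -> Rcont h t -> Rcont (fun s => Cplus (g s) (h s)) t.
Proof.
  intros Hg Hh eps Heps. destruct (Hg (eps/2) ltac:(lra)) as [d1 [Hd1 H1]].
  destruct (Hh (eps/2) ltac:(lra)) as [d2 [Hd2 H2]].
  exists (Rmin d1 d2); split. apply Rmin_pos; auto.
  intros s Hs. specialize (H1 s ltac:(eapply Rlt_le_trans; [exact Hs|apply Rmin_l])).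
  specialize (H2 s ltac:(eapply Rlt_le_trans; [exact Hs|apply Rmin_r])).
  replace (Cminus (Cplus (g s) (h s)) (Cplus (g t) (h t))) with (Cplus (Cminus (g s) (g t)) (Cminus (h s) (h t))) by ring.
  eapply Rle_lt_trans; [apply Cmod_triangle|]. lra.
Qed.

Lemma Rcont_mult g h t : Rcont g t -> Rcont h t -> Rcont (fun s => Cmult (g s) (h s)) t.
Proof.
  intros Hg Hh eps Heps.
  set (A := Cmod (g t) + 1). set (B := Cmod (h t) + 1).
  assert (HA : 0 < A) by (unfold A; pose proof (Cmod_ge_0 (g t)); lra).
  assert (HB : 0 < B) by (unfold B; pose proof (Cmod_ge_0 (h t)); lra).
  set (e1 := Rmin 1 (eps / (2 * B))). set (e2 := eps / (2 * (A + 1))).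
  assert (He1 : 0 < e1) by (apply Rmin_pos; [lra|apply Rdiv_lt_0_compat; lra]).
  assert (He2 : 0 < e2) by (apply Rdiv_lt_0_compat; lra).
  destruct (Hg e1 He1) as [d1 [Hd1 H1]]. destruct (Hh e2 He2) as [d2 [Hd2 H2]].
  exists (Rmin d1 d2); split. apply Rmin_pos; auto.
  intros s Hs. specialize (H1 s ltac:(eapply Rlt_le_trans; [exact Hs|apply Rmin_l])).
  specialize (H2 s ltac:(eapply Rlt_le_trans; [exact Hs|apply Rmin_r])).
  replace (Cminus (Cmult (g s) (h s)) (Cmult (g t) (h t)))
    with (Cplus (Cmult (Cminus (g s) (g t)) (h t)) (Cmult (g s) (Cminus (h s) (h t)))) by ring.
  eapply Rle_lt_trans; [apply Cmod_triangle|]. rewrite !Cmod_mult.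
  assert (Hgs : Cmod (g s) <= A + 1).
  { replace (g s) with (Cplus (g t) (Cminus (g s) (g t))) by ring.
    eapply Rle_trans; [apply Cmod_triangle|]. unfold A. assert (e1 <= 1) by apply Rmin_l. lra. }
  pose proof (Cmod_ge_0 (Cminus (g s) (g t))) as P1. pose proof (Cmod_ge_0 (h t)) as P2.
  pose proof (Cmod_ge_0 (g s)) as P3. pose proof (Cmod_ge_0 (Cminus (h s) (h t))) as P4.
  assert (Y1 : Cmod (Cminus (g s) (g t)) * Cmod (h t) <= e1 * Cmod (h t)) by (apply Rmult_le_compat_r; lra).
  assert (Y2 : e1 * Cmod (h t) < e1 * B) by (apply Rmult_lt_compat_l; unfold B; lra).
  assert (Y3 : e1 * B <= eps / 2).
  { assert (e1 <= eps / (2 * B)) by apply Rmin_r.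
    replace (eps / 2) with (eps / (2 * B) * B) by (field; lra). nra. }
  assert (Y4 : Cmod (g s) * Cmod (Cminus (h s) (h t)) <= (A + 1) * Cmod (Cminus (h s) (h t))) by (apply Rmult_le_compat_r; lra).
  assert (Y5 : (A + 1) * Cmod (Cminus (h s) (h t)) < (A + 1) * e2) by (apply Rmult_lt_compat_l; lra).
  assert (Y6 : (A + 1) * e2 = eps / 2) by (unfold e2; field; lra).
  lra.
Qed.

Lemma RD_Re g t l : RD g t l -> is_derive (fun s => Re (g s)) t (Re l).
Proof.
  intros H. apply is_derive_Reals. intros eps Heps.
  destruct (H (eps/2) ltac:(lra)) as [d [Hd H']]. exists (mkposreal d Hd). intros h Hh Hhd.
  simpl in Hhd. specialize (H' (t + h) ltac:(replace (t + h - t) with h by ring; exact Hhd)).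
  replace (t + h - t) with h in H' by ring.
  pose proof (re_le_Cmod (Cminus (Cminus (g (t + h)) (g t)) (Cmult (RtoC h) l))) as R.
  assert (E : Re (Cminus (Cminus (g (t + h)) (g t)) (Cmult (RtoC h) l)) = Re (g (t+h)) - Re (g t) - h * Re l).
  { destruct (g (t+h)), (g t), l; simpl. ring. }
  rewrite E in R.
  replace ((Re (g (t + h)) - Re (g t)) / h - Re l) with ((Re (g (t + h)) - Re (g t) - h * Re l) / h) by (field; auto).
  unfold Rdiv. rewrite Rabs_mult, Rabs_inv. apply Rmult_lt_reg_r with (Rabs h). apply Rabs_pos_lt; auto.
  rewrite Rmult_assoc, Rinv_l by (apply Rabs_no_R0; auto). pose proof (Rabs_pos_lt h Hh). nra.
Qed.

Lemma RD_Im g t l : RD g t l -> is_derive (fun s => Im (g s)) t (Im l).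
Proof.
  intros H. apply is_derive_Reals. intros eps Heps.
  destruct (H (eps/2) ltac:(lra)) as [d [Hd H']]. exists (mkposreal d Hd). intros h Hh Hhd.
  simpl in Hhd. specialize (H' (t + h) ltac:(replace (t + h - t) with h by ring; exact Hhd)).
  replace (t + h - t) with h in H' by ring.
  pose proof (im_le_Cmod (Cminus (Cminus (g (t + h)) (g t)) (Cmult (RtoC h) l))) as R.
  assert (E : Im (Cminus (Cminus (g (t + h)) (g t)) (Cmult (RtoC h) l)) = Im (g (t+h)) - Im (g t) - h * Im l).
  { destruct (g (t+h)), (g t), l; simpl. ring. }
  rewrite E in R.
  replace ((Im (g (t + h)) - Im (g t)) / h - Im l) with ((Im (g (t + h)) - Im (g t) - h * Im l) / h) by (field; auto).
  unfold Rdiv. rewrite Rabs_mult, Rabs_inv. apply Rmult_lt_reg_r with (Rabs h). apply Rabs_pos_lt; auto.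
  rewrite Rmult_assoc, Rinv_l by (apply Rabs_no_R0; auto). pose proof (Rabs_pos_lt h Hh). nra.
Qed.

Lemma comp_RD g t l : is_derive (fun s => Re (g s)) t (Re l) -> is_derive (fun s => Im (g s)) t (Im l) -> RD g t l.
Proof.
  intros H1 H2 eps Heps. apply is_derive_Reals in H1, H2.
  destruct (H1 (eps/2) ltac:(lra)) as [d1 H1']. destruct (H2 (eps/2) ltac:(lra)) as [d2 H2'].
  exists (Rmin d1 d2). split. apply Rmin_pos; apply cond_pos.
  intros s Hs. destruct (Req_dec s t) as [E|Hne].
  - subst. replace (Cminus (Cminus (g t) (g t)) (Cmult (RtoC (t - t)) l)) with (RtoC 0) by (replace (t - t) with 0 by ring; ring).
    rewrite Cmod_0. replace (t - t) with 0 by ring. rewrite Rabs_R0. lra.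
  - set (h := s - t). assert (Hh : h <> 0) by (unfold h; lra).
    specialize (H1' h Hh ltac:(eapply Rlt_le_trans; [exact Hs|apply Rmin_l])).
    specialize (H2' h Hh ltac:(eapply Rlt_le_trans; [exact Hs|apply Rmin_r])).
    replace (t + h) with s in H1', H2' by (unfold h; ring).
    eapply Rle_trans; [apply Cmod_le_sum|].
    assert (E1 : Re (Cminus (Cminus (g s) (g t)) (Cmult (RtoC h) l)) = (((Re (g s) - Re (g t)) / h - Re l) * h)).
    { destruct (g s), (g t), l; simpl. field; auto. }
    assert (E2 : Im (Cminus (Cminus (g s) (g t)) (Cmult (RtoC h) l)) = (((Im (g s) - Im (g t)) / h - Im l) * h)).
    { destruct (g s), (g t), l; simpl. field; auto. }
    fold h. rewrite E1, E2, !Rabs_mult. pose proof (Rabs_pos h). nra.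
Qed.

Lemma RD_plus g h t a b : RD g t a -> RD h t b -> RD (fun s => Cplus (g s) (h s)) t (Cplus a b).
Proof.
  intros Hg Hh. apply comp_RD.
  - apply (is_derive_plus (fun s => Re (g s)) (fun s => Re (h s))); [apply RD_Re, Hg|apply RD_Re, Hh].
  - apply (is_derive_plus (fun s => Im (g s)) (fun s => Im (h s))); [apply RD_Im, Hg|apply RD_Im, Hh].
Qed.

Lemma RD_mult g h t a b : RD g t a -> RD h t b ->
  RD (fun s => Cmult (g s) (h s)) t (Cplus (Cmult a (h t)) (Cmult (g t) b)).
Proof.
  intros Hg Hh. pose proof (RD_Re _ _ _ Hg) as A1. pose proof (RD_Im _ _ _ Hg) as A2.
  pose proof (RD_Re _ _ _ Hh) as B1. pose proof (RD_Im _ _ _ Hh) as B2.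
  apply comp_RD.
  - eapply is_derive_ext. intros s. symmetry. apply re_mult.
    pose proof (is_derive_minus _ _ _ _ _ (is_derive_mult _ _ _ _ _ A1 B1 Rmult_comm) (is_derive_mult _ _ _ _ _ A2 B2 Rmult_comm)) as D.
    replace (Re (Cplus (Cmult a (h t)) (Cmult (g t) b))) with
      (minus (plus (mult (Re a) (Re (h t))) (mult (Re (g t)) (Re b))) (plus (mult (Im a) (Im (h t))) (mult (Im (g t)) (Im b)))).
    exact D. destruct a, b, (g t), (h t); simpl. unfold minus, plus, opp, mult; simpl. ring.
  - eapply is_derive_ext. intros s. symmetry. apply im_mult.
    pose proof (is_derive_plus _ _ _ _ _ (is_derive_mult _ _ _ _ _ A1 B2 Rmult_comm) (is_derive_mult _ _ _ _ _ A2 B1 Rmult_comm)) as D.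
    replace (Im (Cplus (Cmult a (h t)) (Cmult (g t) b))) with
      (plus (plus (mult (Re a) (Im (h t))) (mult (Re (g t)) (Im b))) (plus (mult (Im a) (Re (h t))) (mult (Im (g t)) (Re b)))).
    exact D. destruct a, b, (g t), (h t); simpl. unfold minus, plus, opp, mult; simpl. ring.
Qed.

Lemma RD_const (c : C) t : RD (fun _ => c) t (RtoC 0).
Proof.
  intros eps Heps. exists 1; split; [lra|]. intros s _.
  replace (Cminus (Cminus c c) (Cmult (RtoC (s - t)) (RtoC 0))) with (RtoC 0) by ring.
  rewrite Cmod_0. pose proof (Rabs_pos (s - t)). nra.
Qed.

Lemma RD_ext g h t l : (forall s, g s = h s) -> RD g t l -> RD h t l.
Proof. intros E H eps Heps. destruct (H eps Heps) as [d [Hd H']]. exists d; split; auto.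
  intros s Hs. rewrite <- !E. auto. Qed.

Lemma RD_scal (c : C) g t a : RD g t a -> RD (fun s => Cmult c (g s)) t (Cmult c a).
Proof.
  intros H. replace (Cmult c a) with (Cplus (Cmult (RtoC 0) (g t)) (Cmult c a)) by ring.
  apply (RD_mult (fun _ => c) g t (RtoC 0) a (RD_const c t) H).
Qed.

Lemma RD_comp (f : C -> C) (g : R -> C) t l m :
  Cderiv f (g t) l -> RD g t m -> RD (fun s => f (g s)) t (Cmult m l).
Proof.
  intros Hf Hg eps Heps.
  set (Km := Cmod m + 1). set (Kl := Cmod l + 1).
  assert (HKm : 0 < Km) by (unfold Km; pose proof (Cmod_ge_0 m); lra).
  assert (HKl : 0 < Kl) by (unfold Kl; pose proof (Cmod_ge_0 l); lra).
  destruct (Cderiv_eps f (g t) l Hf (eps / (2 * Km))) as [d1 [Hd1 H1]].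
  { apply Rdiv_lt_0_compat; lra. }
  destruct (Hg 1 ltac:(lra)) as [d2 [Hd2 H2]].
  destruct (Hg (eps / (2 * Kl))) as [d3 [Hd3 H3]]. { apply Rdiv_lt_0_compat; lra. }
  exists (Rmin (Rmin d2 d3) (d1 / Km)). split.
  { repeat apply Rmin_pos; auto. apply Rdiv_lt_0_compat; lra. }
  intros s Hs.
  assert (Hs2 : Rabs (s - t) < d2) by (eapply Rlt_le_trans; [exact Hs|]; eapply Rle_trans; apply Rmin_l).
  assert (Hs3 : Rabs (s - t) < d3) by (eapply Rlt_le_trans; [exact Hs|]; eapply Rle_trans; [apply Rmin_l|apply Rmin_r]).
  assert (Hs1 : Rabs (s - t) < d1 / Km) by (eapply Rlt_le_trans; [exact Hs|apply Rmin_r]).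
  specialize (H2 s Hs2). specialize (H3 s Hs3).
  set (u := Cminus (g s) (g t)) in *.
  assert (Hu : Cmod u <= Km * Rabs (s - t)).
  { replace u with (Cplus (Cminus u (Cmult (RtoC (s - t)) m)) (Cmult (RtoC (s - t)) m)) by ring.
    eapply Rle_trans; [apply Cmod_triangle|]. rewrite Cmod_RtoC_mult. unfold Km. lra. }
  assert (Hu1 : Cmod (Cminus (g s) (g t)) < d1).
  { fold u. eapply Rle_lt_trans; [exact Hu|]. apply Rmult_lt_reg_r with (/ Km). apply Rinv_0_lt_compat; lra.
    rewrite Rmult_comm, <- Rmult_assoc, Rinv_l by lra. rewrite Rmult_1_l. exact Hs1. }
  specialize (H1 (g s) Hu1). fold u in H1.
  replace (Cminus (Cminus (f (g s)) (f (g t))) (Cmult (RtoC (s - t)) (Cmult m l)))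
    with (Cplus (Cminus (Cminus (f (g s)) (f (g t))) (Cmult u l)) (Cmult (Cminus u (Cmult (RtoC (s - t)) m)) l))
    by (unfold u; ring).
  eapply Rle_trans; [apply Cmod_triangle|]. rewrite Cmod_mult.
  assert (A1 : eps / (2 * Km) * Cmod u <= eps / 2 * Rabs (s - t)).
  { replace (eps / 2 * Rabs (s - t)) with (eps / (2 * Km) * (Km * Rabs (s - t))) by (field; lra).
    apply Rmult_le_compat_l; auto. left; apply Rdiv_lt_0_compat; lra. }
  assert (A2 : Cmod (Cminus u (Cmult (RtoC (s - t)) m)) * Cmod l <= eps / 2 * Rabs (s - t)).
  { eapply Rle_trans. apply Rmult_le_compat_r; [apply Cmod_ge_0|exact H3].
    replace (eps / 2 * Rabs (s - t)) with (eps / (2 * Kl) * Rabs (s - t) * Kl) by (field; lra).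
    apply Rmult_le_compat_l. pose proof (Rabs_pos (s - t)). assert (0 < eps / (2 * Kl)) by (apply Rdiv_lt_0_compat; lra). nra.
    unfold Kl; lra. }
  lra.
Qed.

Lemma RD_line (p v : C) t : RD (fun s => Cplus p (Cmult (RtoC s) v)) t v.
Proof.
  intros eps Heps. exists 1; split; [lra|]. intros s _.
  replace (Cminus (Cminus (Cplus p (Cmult (RtoC s) v)) (Cplus p (Cmult (RtoC t) v))) (Cmult (RtoC (s - t)) v))
    with (RtoC 0) by (unfold RtoC, Cminus, Cplus, Cmult, Copp; simpl; f_equal; ring).
  rewrite Cmod_0. pose proof (Rabs_pos (s - t)). nra.
Qed.

Definition E (x : R) : C := (cos x, sin x).

Lemma E_add x y : E (x + y) = Cmult (E x) (E y).
Proof. unfold E, Cmult; simpl. rewrite cos_plus, sin_plus. f_equal; ring. Qed.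

Lemma E_0 : E 0 = RtoC 1.
Proof. unfold E. rewrite cos_0, sin_0. reflexivity. Qed.

Lemma Cmod_E x : Cmod (E x) = 1.
Proof. unfold E, Cmod; simpl. pose proof (sin2_cos2 x) as H. unfold Rsqr in H. replace (cos x * (cos x * 1) + sin x * (sin x * 1)) with 1 by nra. apply sqrt_1. Qed.

Lemma E_period (k : nat) : E (- INR k * (2 * PI)) = RtoC 1.
Proof.
  unfold E. replace (- INR k * (2 * PI)) with (- (0 + 2 * INR k * PI)) by ring.
  rewrite cos_neg, sin_neg, cos_period, sin_period, cos_0, sin_0. unfold RtoC. f_equal; ring.
Qed.

Lemma E_2PI : E (2 * PI) = RtoC 1.
Proof. unfold E. rewrite cos_2PI, sin_2PI. reflexivity. Qed.

Lemma RD_E (c t : R) : RD (fun s => E (c * s)) t (Cmult (Cmult (RtoC c) Ci) (E (c * t))).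
Proof.
  apply comp_RD; unfold E; simpl.
  - replace (c * 0 - 0 * 1) with 0 by ring.
    assert (H : is_derive (fun s => cos (c * s)) t (c * - sin (c * t))).
    { apply (is_derive_comp cos (fun s => c * s) t (- sin (c * t)) c). apply is_derive_cos'.
      assert (is_derive (fun s => c * s) t (c * 1)) by (apply is_derive_scal; apply (is_derive_id t)).
      rewrite Rmult_1_r in H. exact H. }
    replace (0 * cos (c * t) - (c * 1 + 0 * 0) * sin (c * t)) with (c * - sin (c * t)) by ring. exact H.
  - assert (H : is_derive (fun s => sin (c * s)) t (c * cos (c * t))).
    { apply (is_derive_comp sin (fun s => c * s) t (cos (c * t)) c). apply is_derive_sin'.
      assert (is_derive (fun s => c * s) t (c * 1)) by (apply is_derive_scal; apply (is_derive_id t)).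
      rewrite Rmult_1_r in H. exact H. }
    replace (0 * sin (c * t) + c * cos (c * t)) with (c * cos (c * t)) by ring.
    replace (c * 0 - 0 * 1) with 0 by ring. replace (0 * sin (c * t) + (c * 1 + 0 * 0) * cos (c * t)) with (c * cos (c * t)) by ring.
    exact H.
Qed.

Lemma eps_continuous (f : R -> R) t :
  (forall eps, 0 < eps -> exists del, 0 < del /\ forall s, Rabs (s - t) < del -> Rabs (f s - f t) < eps) ->
  continuous f t.
Proof.
  intros H P [e He]. destruct (H e (cond_pos e)) as [d [Hd H']].
  exists (mkposreal d Hd). intros s Hs. apply He. apply H'. exact Hs.
Qed.

Lemma Rcont_Re g t : Rcont g t -> continuous (fun s => Re (g s)) t.
Proof.
  intros H. apply eps_continuous. intros eps Heps. destruct (H eps Heps) as [d [Hd H']].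
  exists d; split; auto. intros s Hs. eapply Rle_lt_trans; [|apply (H' s Hs)].
  replace (Re (g s) - Re (g t)) with (Re (Cminus (g s) (g t))) by (destruct (g s), (g t); simpl; ring).
  apply re_le_Cmod.
Qed.

Lemma Rcont_Im g t : Rcont g t -> continuous (fun s => Im (g s)) t.
Proof.
  intros H. apply eps_continuous. intros eps Heps. destruct (H eps Heps) as [d [Hd H']].
  exists d; split; auto. intros s Hs. eapply Rle_lt_trans; [|apply (H' s Hs)].
  replace (Im (g s) - Im (g t)) with (Im (Cminus (g s) (g t))) by (destruct (g s), (g t); simpl; ring).
  apply im_le_Cmod.
Qed.

Definition CInt (g : R -> C) : C :=
  (RInt (fun s => Re (g s)) 0 (2 * PI), RInt (fun s => Im (g s)) 0 (2 * PI)).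

Definition Gcont (g : R -> C) := forall t, Rcont g t.

Lemma exRe g : Gcont g -> ex_RInt (fun s => Re (g s)) 0 (2 * PI).
Proof. intros H. apply (@ex_RInt_continuous R_CompleteNormedModule). intros; apply Rcont_Re, H. Qed.
Lemma exIm g : Gcont g -> ex_RInt (fun s => Im (g s)) 0 (2 * PI).
Proof. intros H. apply (@ex_RInt_continuous R_CompleteNormedModule). intros; apply Rcont_Im, H. Qed.

Lemma RInt_scal_R (f : R -> R) a : ex_RInt f 0 (2*PI) ->
  RInt (fun s => a * f s) 0 (2*PI) = a * RInt f 0 (2*PI).
Proof. intros H. exact (RInt_scal (V:=R_CompleteNormedModule) f 0 (2*PI) a H). Qed.
Lemma ex_RInt_scal_R (f : R -> R) a : ex_RInt f 0 (2*PI) -> ex_RInt (fun s => a * f s) 0 (2*PI).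
Proof. intros H. exact (ex_RInt_scal (V:=R_CompleteNormedModule) f 0 (2*PI) a H). Qed.
Lemma RInt_minus_R (f g : R -> R) : ex_RInt f 0 (2*PI) -> ex_RInt g 0 (2*PI) ->
  RInt (fun s => f s - g s) 0 (2*PI) = RInt f 0 (2*PI) - RInt g 0 (2*PI).
Proof. intros H1 H2. exact (RInt_minus (V:=R_CompleteNormedModule) f g 0 (2*PI) H1 H2). Qed.
Lemma RInt_plus_R (f g : R -> R) : ex_RInt f 0 (2*PI) -> ex_RInt g 0 (2*PI) ->
  RInt (fun s => f s + g s) 0 (2*PI) = RInt f 0 (2*PI) + RInt g 0 (2*PI).
Proof. intros H1 H2. exact (RInt_plus (V:=R_CompleteNormedModule) f g 0 (2*PI) H1 H2). Qed.

Lemma CInt_plus g h : Gcont g -> Gcont h -> CInt (fun s => Cplus (g s) (h s)) = Cplus (CInt g) (CInt h).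
Proof.
  intros Hg Hh. unfold CInt, Cplus; simpl. f_equal.
  - rewrite <- (RInt_plus_R (fun s => Re (g s)) (fun s => Re (h s))) by (apply exRe; auto).
    apply RInt_ext. intros; reflexivity.
  - rewrite <- (RInt_plus_R (fun s => Im (g s)) (fun s => Im (h s))) by (apply exIm; auto).
    apply RInt_ext. intros; reflexivity.
Qed.

Lemma CInt_scal (c : C) g : Gcont g -> CInt (fun s => Cmult c (g s)) = Cmult c (CInt g).
Proof.
  intros Hg. pose proof (exRe g Hg) as E1. pose proof (exIm g Hg) as E2.
  unfold CInt, Cmult; simpl. destruct c as [a b]. simpl. f_equal.
  - transitivity (RInt (fun s => a * Re (g s) - b * Im (g s)) 0 (2 * PI)).
    { apply RInt_ext. intros; reflexivity. }
    rewrite (RInt_minus_R (fun s => a * Re (g s)) (fun s => b * Im (g s))).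
    rewrite (RInt_scal_R (fun s => Re (g s)) a E1).
    rewrite (RInt_scal_R (fun s => Im (g s)) b E2). reflexivity.
    apply (ex_RInt_scal_R (fun s => Re (g s)) a E1).
    apply (ex_RInt_scal_R (fun s => Im (g s)) b E2).
  - transitivity (RInt (fun s => a * Im (g s) + b * Re (g s)) 0 (2 * PI)).
    { apply RInt_ext. intros x _. reflexivity. }
    rewrite (RInt_plus_R (fun s => a * Im (g s)) (fun s => b * Re (g s))).
    rewrite (RInt_scal_R (fun s => Re (g s)) b E1).
    rewrite (RInt_scal_R (fun s => Im (g s)) a E2). reflexivity.
    apply (ex_RInt_scal_R (fun s => Im (g s)) a E2).
    apply (ex_RInt_scal_R (fun s => Re (g s)) b E1).
Qed.

Lemma CInt_const (c : C) : CInt (fun _ => c) = Cmult (RtoC (2 * PI)) c.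
Proof.
  unfold CInt. rewrite !RInt_const. destruct c as [a b]. unfold Cmult, RtoC; simpl.
  unfold scal; simpl; unfold mult; simpl. f_equal; ring.
Qed.

Lemma CInt_bound g B : Gcont g -> (forall t, 0 <= t <= 2 * PI -> Cmod (g t) <= B) ->
  Cmod (CInt g) <= 4 * PI * B.
Proof.
  intros Hg Hb. unfold CInt. eapply Rle_trans; [apply Cmod_le_sum|]. simpl.
  pose proof PI_RGT_0.
  assert (A1 : Rabs (RInt (fun s => Re (g s)) 0 (2 * PI)) <= (2 * PI - 0) * B).
  { apply abs_RInt_le_const. lra. apply exRe; auto. intros t Ht. eapply Rle_trans; [apply re_le_Cmod|auto]. }
  assert (A2 : Rabs (RInt (fun s => Im (g s)) 0 (2 * PI)) <= (2 * PI - 0) * B).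
  { apply abs_RInt_le_const. lra. apply exIm; auto. intros t Ht. eapply Rle_trans; [apply im_le_Cmod|auto]. }
  lra.
Qed.

Lemma CInt_FTC (G G' : R -> C) : (forall t, RD G t (G' t)) -> Gcont G' ->
  CInt G' = Cminus (G (2 * PI)) (G 0).
Proof.
  intros HD Hc. unfold CInt.
  rewrite (is_RInt_unique (fun s => Re (G' s)) 0 (2 * PI) (minus (Re (G (2 * PI))) (Re (G 0)))).
  rewrite (is_RInt_unique (fun s => Im (G' s)) 0 (2 * PI) (minus (Im (G (2 * PI))) (Im (G 0)))).
  - destruct (G (2 * PI)), (G 0). unfold minus, plus, opp; simpl. reflexivity.
  - apply (is_RInt_derive (fun s => Im (G s))). intros; apply RD_Im, HD. intros; apply Rcont_Im, Hc.
  - apply (is_RInt_derive (fun s => Re (G s))). intros; apply RD_Re, HD. intros; apply Rcont_Re, Hc.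
Qed.

Definition toC (t : Compactness.Tn 2 R) : C := (fst t, fst (snd t)).

Lemma compact_disk (c : C) (R : R) : compactC (fun z => Cmod (Cminus z c) <= R).
Proof.
  intros I O Hopen Hcov.
  destruct (Rlt_or_le R 0) as [HR|HR].
  { exists nil. intros z Hz. pose proof (Cmod_ge_0 (Cminus z c)). lra. }
  destruct (Hcov c) as [i0 _]. { replace (Cminus c c) with (RtoC 0) by ring. rewrite Cmod_0. lra. }
  set (good := fun (p : C) (d : posreal) =>
    (Cmod (Cminus p c) <= R -> exists i, forall y, Cmod (Cminus y p) < 2 * d -> O i y) /\
    (R < Cmod (Cminus p c) -> forall y, Cmod (Cminus y p) < 2 * d -> R < Cmod (Cminus y c))).
  assert (Hgood : forall p, exists d, good p d).
  { intros p. destruct (Rle_or_lt (Cmod (Cminus p c)) R) as [Hp|Hp].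
    - destruct (Hcov p Hp) as [i Hi]. destruct (Hopen i p Hi) as [e [He He']].
      exists (mkposreal (e/2) ltac:(lra)). split.
      + intros _. exists i. intros y Hy. apply He'. simpl in Hy. lra.
      + intros; lra.
    - exists (mkposreal ((Cmod (Cminus p c) - R)/2) ltac:(lra)). split.
      + intros; lra.
      + intros _ y Hy. simpl in Hy.
        assert (Cmod (Cminus p c) <= Cmod (Cminus y c) + Cmod (Cminus y p)).
        { replace (Cminus p c) with (Cplus (Cminus y c) (Copp (Cminus y p))) by ring.
          eapply Rle_trans; [apply Cmod_triangle|]. rewrite Cmod_opp. lra. }
        lra. }
  set (delta := fun p => epsilon (inhabits (mkposreal 1 Rlt_0_1)) (good p)).
  assert (Hdelta : forall p, good p (delta p)) by (intros p; apply epsilon_spec, Hgood).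
  set (idx := fun p => epsilon (inhabits i0) (fun i => forall y, Cmod (Cminus y p) < 2 * delta p -> O i y)).
  pose proof (compactness_list 2 (fst c - R, (snd c - R, tt)) (fst c + R, (snd c + R, tt)) (fun t => delta (toC t))) as HL.
  apply NNPP. intros Hn. apply HL. intros [l Hl]. apply Hn.
  exists (map (fun t => idx (toC t)) l). intros z Hz.
  destruct (Hl (fst z, (snd z, tt))) as [t [Ht1 [Ht2 Ht3]]].
  { simpl. pose proof (re_le_Cmod (Cminus z c)). pose proof (im_le_Cmod (Cminus z c)).
    destruct z, c. simpl in *. unfold Rabs in *. repeat destruct Rcase_abs; repeat split; lra. }
  destruct t as [t1 [t2 []]]. simpl in Ht3. unfold toC in *; simpl in *.
  set (p := (t1, t2) : C) in *.
  assert (Hzp : Cmod (Cminus z p) < 2 * delta p).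
  { eapply Rle_lt_trans; [apply Cmod_le_sum|].
    replace (Re (Cminus z p)) with (fst z - t1) by (unfold p; destruct z; simpl; ring).
    replace (Im (Cminus z p)) with (snd z - t2) by (unfold p; destruct z; simpl; ring).
    destruct Ht3 as [A [B _]]. lra. }
  destruct (Hdelta p) as [G1 G2].
  destruct (Rle_or_lt (Cmod (Cminus p c)) R) as [Hp|Hp].
  - exists (idx p). split.
    + apply in_map_iff. exists (t1, (t2, tt)). split; auto.
    + apply (epsilon_spec (inhabits i0) (fun i => forall y, Cmod (Cminus y p) < 2 * delta p -> O i y)).
      apply G1; auto. auto.
  - exfalso. specialize (G2 Hp z Hzp). lra.
Qed.

Lemma fold_max_in {A} (g : A -> R) (l : list A) x : In x l -> g x <= fold_right Rmax 0 (map g l).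
Proof.
  induction l as [|a l IH]; simpl; [tauto|]. intros [->|H].
  - apply Rmax_l.
  - eapply Rle_trans; [apply IH; auto|apply Rmax_r].
Qed.

Lemma cont_bounded (f : C -> C) (c : C) (R : R) : (forall z, Ccont f z) ->
  exists M, forall z, Cmod (Cminus z c) <= R -> Cmod (f z) <= M.
Proof.
  intros Hf.
  destruct (compact_disk c R C (fun x y => Cmod (f y) < Cmod (f x) + 1)) as [l Hl].
  - intros x y Hy. destruct (Hf y (Cmod (f x) + 1 - Cmod (f y)) ltac:(lra)) as [d [Hd H]].
    exists d; split; auto. intros y' Hy'. specialize (H y' Hy').
    assert (Cmod (f y') <= Cmod (f y) + Cmod (Cminus (f y') (f y))).
    { replace (f y') with (Cplus (f y) (Cminus (f y') (f y))) at 1 by ring. apply Cmod_triangle. }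
    lra.
  - intros z _. exists z. lra.
  - exists (fold_right Rmax 0 (map (fun x => Cmod (f x) + 1) l)). intros z Hz.
    destruct (Hl z Hz) as [x [Hx1 Hx2]].
    pose proof (fold_max_in (fun x => Cmod (f x) + 1) l x Hx1). simpl in H. lra.
Qed.

Definition gam (w : C) (r t : R) : C := Cplus w (Cmult (RtoC r) (E t)).
Definition Jk (w : C) (psi : C -> C) (k : nat) (r : R) : C :=
  CInt (fun t => Cmult (psi (gam w r t)) (E (- INR k * t))).
Definition J0 (w : C) (psi : C -> C) (r : R) : C := CInt (fun t => psi (gam w r t)).

Lemma RD_eq g t l l' : l = l' -> RD g t l -> RD g t l'.
Proof. intros ->; auto. Qed.

Lemma CInt_ext g h : (forall t, g t = h t) -> CInt g = CInt h.
Proof. intros H. f_equal. apply functional_extensionality. auto. Qed.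

Lemma RD_E1 t : RD E t (Cmult Ci (E t)).
Proof.
  pose proof (RD_E 1 t) as H. apply RD_ext with (fun s => E (1 * s)). intros s. rewrite Rmult_1_l. reflexivity.
  eapply RD_eq; [|exact H]. rewrite Rmult_1_l. ring.
Qed.

Lemma RD_gam w r t : RD (gam w r) t (Cmult (RtoC r) (Cmult Ci (E t))).
Proof.
  unfold gam. eapply RD_eq; [|apply RD_plus; [apply RD_const|apply RD_scal, RD_E1]]. ring.
Qed.

Lemma RD_Dgam (D : nat -> C -> C) (HD : forall n z, Cderiv (D n) z (D (S n) z)) w r m t :
  RD (fun s => D m (gam w r s)) t (Cmult (Cmult (RtoC r) (Cmult Ci (E t))) (D (S m) (gam w r t))).
Proof. apply RD_comp. apply HD. apply RD_gam. Qed.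

Lemma Gcont_Dgam (D : nat -> C -> C) (HD : forall n z, Cderiv (D n) z (D (S n) z)) w r m :
  Gcont (fun s => D m (gam w r s)).
Proof. intros t. eapply RD_cont, RD_Dgam; auto. Qed.

Lemma Gcont_Ek (c : R) : Gcont (fun s => E (c * s)).
Proof. intros t. eapply RD_cont, RD_E. Qed.

Lemma Gcont_E : Gcont E.
Proof. intros t. eapply RD_cont, RD_E1. Qed.

Lemma Gcont_mult g h : Gcont g -> Gcont h -> Gcont (fun s => Cmult (g s) (h s)).
Proof. intros H1 H2 t. apply Rcont_mult; auto. Qed.

Lemma Gcont_plus g h : Gcont g -> Gcont h -> Gcont (fun s => Cplus (g s) (h s)).
Proof. intros H1 H2 t. apply Rcont_plus; auto. Qed.

Lemma Gcont_const (c : C) : Gcont (fun _ => c).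
Proof. intros t. eapply RD_cont, RD_const. Qed.

Lemma Gcont_scal (c : C) g : Gcont g -> Gcont (fun s => Cmult c (g s)).
Proof. intros H. apply Gcont_mult; auto. apply Gcont_const. Qed.



Lemma Gcont_ext g h : (forall s, g s = h s) -> Gcont g -> Gcont h.
Proof. intros E' H. replace h with g; auto. apply functional_extensionality; auto. Qed.

Lemma Gcont_minus g h : Gcont g -> Gcont h -> Gcont (fun s => Cminus (g s) (h s)).
Proof. intros H1 H2. apply Gcont_ext with (fun s => Cplus (g s) (Cmult (RtoC (-1)) (h s))).
  intros s. ring. apply Gcont_plus; auto. apply Gcont_scal; auto. Qed.

Lemma CInt_minus g h : Gcont g -> Gcont h -> CInt (fun s => Cminus (g s) (h s)) = Cminus (CInt g) (CInt h).
Proof.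
  intros H1 H2. rewrite (CInt_ext _ (fun s => Cplus (g s) (Cmult (RtoC (-1)) (h s)))) by (intros; ring).
  rewrite CInt_plus, CInt_scal; auto. ring. apply Gcont_scal; auto.
Qed.

Lemma E_shift t k : Cmult (E t) (E (- INR (S k) * t)) = E (- INR k * t).
Proof. rewrite <- E_add. f_equal. rewrite S_INR. ring. Qed.

Lemma gam_period w r : gam w r (2 * PI) = gam w r 0.
Proof. unfold gam. rewrite E_2PI, E_0. reflexivity. Qed.

Lemma Ci_cancel (Y : C) : Cmult Ci Y = RtoC 0 -> Y = RtoC 0.
Proof. intros H. destruct (Ceq_dec Y (RtoC 0)) as [|n]; auto. exfalso.
  apply (Cmult_neq_0 Ci Y Ci_nz n). exact H. Qed.

Lemma R1 (D : nat -> C -> C) (HD : forall n z, Cderiv (D n) z (D (S n) z)) w r m k :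
  Cmult (RtoC (INR (S k))) (Jk w (D m) (S k) r) = Cmult (RtoC r) (Jk w (D (S m)) k r).
Proof.
  set (A := fun t => Cmult (D (S m) (gam w r t)) (E (- INR k * t))).
  set (B := fun t => Cmult (D m (gam w r t)) (E (- INR (S k) * t))).
  assert (GA : Gcont A) by (apply Gcont_mult; [apply Gcont_Dgam; auto|apply Gcont_Ek]).
  assert (GB : Gcont B) by (apply Gcont_mult; [apply Gcont_Dgam; auto|apply Gcont_Ek]).
  set (G' := fun t => Cplus (Cmult (Cmult (RtoC r) Ci) (A t)) (Cmult (Cmult (RtoC (- INR (S k))) Ci) (B t))).
  assert (HG : forall t, RD B t (G' t)).
  { intros t. unfold B. eapply RD_eq; [|apply RD_mult; [apply RD_Dgam; auto|apply RD_E]].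
    unfold G', A. rewrite <- (E_shift t k). unfold B. match goal with |- ?a = ?b => change (@eq C a b) end. ring. }
  assert (GG' : Gcont G').
  { apply Gcont_plus; apply Gcont_scal; auto. }
  pose proof (CInt_FTC B G' HG GG') as F.
  assert (Z : Cminus (B (2 * PI)) (B 0) = RtoC 0).
  { unfold B. rewrite gam_period. rewrite (E_period (S k)). replace (- INR (S k) * 0) with 0 by ring.
    rewrite E_0. ring. }
  rewrite Z in F. unfold G' in F. rewrite CInt_plus in F by (apply Gcont_scal; auto).
  rewrite !CInt_scal in F by auto.
  unfold Jk. fold A. fold B.
  assert (Y : Cminus (Cmult (RtoC r) (CInt A)) (Cmult (RtoC (INR (S k))) (CInt B)) = RtoC 0).
  { apply Ci_cancel. rewrite <- F. unfold Cminus. rewrite RtoC_opp. ring. }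
  apply (f_equal (fun x => Cplus x (Cmult (RtoC (INR (S k))) (CInt B)))) in Y.
  replace (Cplus (Cminus (Cmult (RtoC r) (CInt A)) (Cmult (RtoC (INR (S k))) (CInt B))) (Cmult (RtoC (INR (S k))) (CInt B)))
    with (Cmult (RtoC r) (CInt A)) in Y by ring.
  rewrite Y. ring.
Qed.

Lemma Taylor2_C (g g1 g2 : R -> C) x y M :
  (forall t, RD g t (g1 t)) -> (forall t, RD g1 t (g2 t)) ->
  (forall t, Rmin x y <= t <= Rmax x y -> Cmod (g2 t) <= M) ->
  Cmod (Cminus (Cminus (g y) (g x)) (Cmult (RtoC (y - x)) (g1 x))) <= 2 * M * (y - x)^2.
Proof.
  intros H1 H2 Hb.
  pose proof (Taylor2_R (fun t => Re (g t)) (fun t => Re (g1 t)) (fun t => Re (g2 t)) x y M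
    (fun t => RD_Re _ _ _ (H1 t)) (fun t => RD_Re _ _ _ (H2 t))) as T1.
  pose proof (Taylor2_R (fun t => Im (g t)) (fun t => Im (g1 t)) (fun t => Im (g2 t)) x y M
    (fun t => RD_Im _ _ _ (H1 t)) (fun t => RD_Im _ _ _ (H2 t))) as T2.
  eapply Rle_trans; [apply Cmod_le_sum|].
  assert (E1 : Re (Cminus (Cminus (g y) (g x)) (Cmult (RtoC (y - x)) (g1 x))) = Re (g y) - Re (g x) - Re (g1 x) * (y - x))
    by (destruct (g y), (g x), (g1 x); simpl; ring).
  assert (E2 : Im (Cminus (Cminus (g y) (g x)) (Cmult (RtoC (y - x)) (g1 x))) = Im (g y) - Im (g x) - Im (g1 x) * (y - x))
    by (destruct (g y), (g x), (g1 x); simpl; ring).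
  rewrite E1, E2.
  assert (A1 : Rabs (Re (g y) - Re (g x) - Re (g1 x) * (y - x)) <= M * (y - x)^2).
  { apply T1. intros t Ht. eapply Rle_trans; [apply re_le_Cmod|apply Hb; auto]. }
  assert (A2 : Rabs (Im (g y) - Im (g x) - Im (g1 x) * (y - x)) <= M * (y - x)^2).
  { apply T2. intros t Ht. eapply Rle_trans; [apply im_le_Cmod|apply Hb; auto]. }
  lra.
Qed.

Lemma const_of_RD0 (j : R -> C) (rho : R) :
  (forall t, RD j t (RtoC 0)) -> j rho = j 0.
Proof.
  intros HD.
  destruct (MVT_gen (fun t => Re (j t)) 0 rho (fun t => 0)) as [c1 [_ M1]].
  { intros t Ht. apply (RD_Re _ _ _ (HD t)). }
  { intros t _. eapply is_derive_cont. apply (RD_Re _ _ _ (HD t)). }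
  destruct (MVT_gen (fun t => Im (j t)) 0 rho (fun t => 0)) as [c2 [_ M2]].
  { intros t Ht. apply (RD_Im _ _ _ (HD t)). }
  { intros t _. eapply is_derive_cont. apply (RD_Im _ _ _ (HD t)). }
  destruct (j rho) as [a b], (j 0) as [a' b']. simpl in M1, M2. f_equal; lra.
Qed.

Lemma Ci_sq : Cmult Ci Ci = RtoC (-1).
Proof. unfold Ci, Cmult, RtoC; simpl. f_equal; ring. Qed.

Lemma CInt_E : CInt E = RtoC 0.
Proof.
  assert (H : forall t, RD (fun s => Cmult (Copp Ci) (E s)) t (E t)).
  { intros t. eapply RD_eq; [|apply RD_scal, RD_E1].
    replace (Cmult (Copp Ci) (Cmult Ci (E t))) with (Cmult (Copp (Cmult Ci Ci)) (E t)) by ring.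
    rewrite Ci_sq. unfold RtoC, Copp, Cmult; destruct (E t); simpl; f_equal; ring. }
  rewrite (CInt_FTC _ _ H Gcont_E). rewrite E_2PI, E_0. ring.
Qed.

Lemma gam_0 w t : gam w 0 t = w.
Proof. unfold gam. ring. Qed.

Lemma Cmod_gam w r t : Cmod (Cminus (gam w r t) w) = Rabs r.
Proof. unfold gam. replace (Cminus (Cplus w (Cmult (RtoC r) (E t))) w) with (Cmult (RtoC r) (E t)) by ring.
  rewrite Cmod_RtoC_mult, Cmod_E. ring. Qed.

Lemma K_zero (D : nat -> C -> C) (HD : forall n z, Cderiv (D n) z (D (S n) z)) w m r :
  CInt (fun t => Cmult (E t) (D (S m) (gam w r t))) = RtoC 0.
Proof.
  destruct (Req_dec r 0) as [->|Hr].
  - rewrite (CInt_ext _ (fun t => Cmult (D (S m) w) (E t))) by (intros; rewrite gam_0; ring).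
    rewrite CInt_scal by apply Gcont_E. rewrite CInt_E. ring.
  - assert (H : forall t, RD (fun s => D m (gam w r s)) t
        (Cmult (Cmult (RtoC r) Ci) (Cmult (E t) (D (S m) (gam w r t))))).
    { intros t. eapply RD_eq; [|apply RD_Dgam; auto]. ring. }
    pose proof (CInt_FTC _ _ H) as F.
    rewrite CInt_scal in F by (apply Gcont_mult; [apply Gcont_E|apply Gcont_Dgam; auto]).
    rewrite gam_period in F.
    assert (Z : Cmult (Cmult (RtoC r) Ci) (CInt (fun t => Cmult (E t) (D (S m) (gam w r t)))) = RtoC 0).
    { rewrite F. ring. apply Gcont_scal, Gcont_mult; [apply Gcont_E|apply Gcont_Dgam; auto]. }
    destruct (Ceq_dec (CInt (fun t => Cmult (E t) (D (S m) (gam w r t)))) (RtoC 0)) as [|n]; auto.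
    assert (Hrc : RtoC r <> RtoC 0) by (intros Hc; apply Hr; apply (f_equal fst) in Hc; exact Hc).
    exfalso. apply (Cmult_neq_0 _ _ (Cmult_neq_0 _ _ Hrc Ci_nz) n Z).
Qed.

Lemma J0_deriv (D : nat -> C -> C) (HD : forall n z, Cderiv (D n) z (D (S n) z)) w m r :
  RD (fun r => J0 w (D m) r) r (CInt (fun t => Cmult (E t) (D (S m) (gam w r t)))).
Proof.
  intros eps Heps.
  destruct (cont_bounded (D (S (S m))) w (Rabs r + 1) (fun z => Cderiv_cont _ _ _ (HD _ z))) as [M2 HM2].
  assert (HM2p : 0 <= M2).
  { eapply Rle_trans; [apply Cmod_ge_0|apply (HM2 w)]. replace (Cminus w w) with (RtoC 0) by ring.
    rewrite Cmod_0. pose proof (Rabs_pos r). lra. }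
  pose proof PI_RGT_0 as Hpi.
  exists (Rmin 1 (eps / (8 * PI * M2 + 1))). split.
  { apply Rmin_pos; [lra|]. apply Rdiv_lt_0_compat; [lra|]. nra. }
  intros s Hs.
  assert (Hs1 : Rabs (s - r) <= 1) by (pose proof (Rmin_l 1 (eps / (8 * PI * M2 + 1))); lra).
  assert (Hs2 : Rabs (s - r) <= eps / (8 * PI * M2 + 1)) by (pose proof (Rmin_r 1 (eps / (8 * PI * M2 + 1))); lra).
  set (P := fun q t => D m (gam w q t)).
  set (Q := fun t => Cmult (E t) (D (S m) (gam w r t))).
  assert (GP : forall q, Gcont (P q)) by (intros; apply Gcont_Dgam; auto).
  assert (GQ : Gcont Q) by (apply Gcont_mult; [apply Gcont_E|apply Gcont_Dgam; auto]).
  unfold J0. fold (P s). fold (P r). fold Q.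
  rewrite <- CInt_scal by auto. rewrite <- !CInt_minus; auto; [|apply Gcont_minus; auto|apply Gcont_scal; auto].
  eapply Rle_trans. apply (CInt_bound _ (2 * M2 * (s - r)^2)).
  { apply Gcont_minus; [apply Gcont_minus; auto|apply Gcont_scal; auto]. }
  - intros t _. unfold P, Q.
    apply (Taylor2_C (fun q => D m (gam w q t)) (fun q => Cmult (E t) (D (S m) (gam w q t)))
       (fun q => Cmult (E t) (Cmult (E t) (D (S (S m)) (gam w q t)))) r s M2).
    + intros q. unfold gam. apply RD_comp. apply HD. apply RD_line.
    + intros q. apply RD_scal. unfold gam. apply RD_comp. apply HD. apply RD_line.
    + intros q Hq. rewrite !Cmod_mult, !Cmod_E, !Rmult_1_l. apply HM2. rewrite Cmod_gam.
      revert Hq Hs1. unfold Rmin, Rmax, Rabs. repeat destruct Rle_dec; repeat destruct Rcase_abs; intros; lra.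
  - assert (X : Rabs (s - r) * (8 * PI * M2 + 1) <= eps).
    { apply Rmult_le_reg_r with (/ (8 * PI * M2 + 1)). apply Rinv_0_lt_compat; nra.
      rewrite Rmult_assoc, Rinv_r by nra. rewrite Rmult_1_r. exact Hs2. }
    rewrite <- (pow2_abs (s - r)).
    pose proof (Rabs_pos (s - r)) as Hp.
    assert (Y : Rabs (s - r) * (Rabs (s - r) * (8 * PI * M2 + 1)) <= Rabs (s - r) * eps) by (apply Rmult_le_compat_l; auto).
    assert (Z : 0 <= Rabs (s - r) * Rabs (s - r)) by nra.
    nra.
Qed.

Lemma R0 (D : nat -> C -> C) (HD : forall n z, Cderiv (D n) z (D (S n) z)) w m r :
  J0 w (D m) r = Cmult (RtoC (2 * PI)) (D m w).
Proof.
  rewrite (const_of_RD0 (fun r => J0 w (D m) r) r).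
  - unfold J0. rewrite (CInt_ext _ (fun _ => D m w)) by (intros; rewrite gam_0; auto). apply CInt_const.
  - intros t. pose proof (J0_deriv D HD w m t) as H. rewrite K_zero in H; auto.
Qed.

Lemma Jk0 w psi r : Jk w psi 0 r = J0 w psi r.
Proof. unfold Jk, J0. apply CInt_ext. intros t. simpl INR. replace (- 0 * t) with 0 by ring. rewrite E_0. ring. Qed.

Lemma Jk_formula (D : nat -> C -> C) (HD : forall n z, Cderiv (D n) z (D (S n) z)) w rho :
  forall n m, Cmult (RtoC (INR (Factorial.fact n))) (Jk w (D m) n rho) = Cmult (RtoC (rho ^ n)) (Cmult (RtoC (2 * PI)) (D (m + n)%nat w)).
Proof.
  induction n as [|n IH]; intros m.
  - simpl. rewrite Jk0, R0 by auto. rewrite Nat.add_0_r. ring.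
  - rewrite fact_simpl, mult_INR, RtoC_mult.
    replace (Cmult (Cmult (RtoC (INR (S n))) (RtoC (INR (Factorial.fact n)))) (Jk w (D m) (S n) rho))
      with (Cmult (RtoC (INR (Factorial.fact n))) (Cmult (RtoC (INR (S n))) (Jk w (D m) (S n) rho))) by ring.
    rewrite R1 by auto.
    replace (Cmult (RtoC (INR (Factorial.fact n))) (Cmult (RtoC rho) (Jk w (D (S m)) n rho)))
      with (Cmult (RtoC rho) (Cmult (RtoC (INR (Factorial.fact n))) (Jk w (D (S m)) n rho))) by ring.
    rewrite IH. replace (S m + n)%nat with (m + S n)%nat by lia. simpl pow. rewrite (RtoC_mult rho (rho ^ n)). ring.
Qed.

Lemma cauchy_est (D : nat -> C -> C) (HD : forall n z, Cderiv (D n) z (D (S n) z)) w rho M n :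
  0 < rho -> (forall z, Cmod (Cminus z w) <= rho -> Cmod (D 0%nat z) <= M) ->
  Cmod (D n w) <= 2 * INR (Factorial.fact n) * M / rho ^ n.
Proof.
  intros Hr HM. pose proof (Jk_formula D HD w rho n 0) as F. rewrite Nat.add_0_l in F.
  apply (f_equal Cmod) in F. rewrite !Cmod_mult, !Cmod_R in F.
  assert (B : Cmod (Jk w (D 0%nat) n rho) <= 4 * PI * M).
  { apply CInt_bound. apply Gcont_mult; [apply Gcont_Dgam; auto|apply Gcont_Ek].
    intros t _. rewrite Cmod_mult, Cmod_E, Rmult_1_r. apply HM. rewrite Cmod_gam. rewrite Rabs_right; lra. }
  pose proof PI_RGT_0. pose proof (pow_lt rho n Hr) as Hrn.
  rewrite (Rabs_right (INR (Factorial.fact n))) in F by (apply Rle_ge, pos_INR).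
  rewrite (Rabs_right (rho ^ n)) in F by lra. rewrite (Rabs_right (2 * PI)) in F by lra.
  pose proof (pos_INR (Factorial.fact n)).
  apply Rmult_le_reg_l with (rho ^ n * (2 * PI)). nra.
  replace (rho ^ n * (2 * PI) * (2 * INR (Factorial.fact n) * M / rho ^ n)) with (INR (Factorial.fact n) * (4 * PI * M)) by (field; lra).
  rewrite Rmult_assoc, <- F. apply Rmult_le_compat_l; auto.
Qed.

Fixpoint csum (g : nat -> C) (n : nat) : C :=
  match n with O => g O | S k => Cplus (csum g k) (g (S k)) end.

Lemma Re_csum g n : Re (csum g n) = sum_f_R0 (fun m => Re (g m)) n.
Proof. induction n; simpl; auto. rewrite <- IHn. destruct (csum g n), (g (S n)); reflexivity. Qed.
Lemma Im_csum g n : Im (csum g n) = sum_f_R0 (fun m => Im (g m)) n.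
Proof. induction n; simpl; auto. rewrite <- IHn. destruct (csum g n), (g (S n)); reflexivity. Qed.

Definition tterm (a : nat -> C) (z : C) (m : nat) : C :=
  Cmult (RtoC (/ INR (Factorial.fact m))) (Cmult (a m) (Cpow z m)).

Definition Fk (D : nat -> C -> C) (z : C) (k : nat) (t : R) : C := Cmult (Cpow z k) (D k (Cmult (RtoC t) z)).

Lemma RD_Fk (D : nat -> C -> C) (HD : forall n z, Cderiv (D n) z (D (S n) z)) z k t :
  RD (Fk D z k) t (Fk D z (S k) t).
Proof.
  unfold Fk. eapply RD_eq; [|apply RD_scal; apply RD_comp; [apply HD|]].
  2:{ apply RD_ext with (fun s => Cplus (RtoC 0) (Cmult (RtoC s) z)). intros; ring. apply RD_line. }
  rewrite Cpow_S. ring.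
Qed.

Lemma Derive_n_Fk (D : nat -> C -> C) (HD : forall n z, Cderiv (D n) z (D (S n) z)) z k :
  Derive_n (fun t => Re (Fk D z 0 t)) k = (fun t => Re (Fk D z k t)) /\
  Derive_n (fun t => Im (Fk D z 0 t)) k = (fun t => Im (Fk D z k t)).
Proof.
  induction k as [|k [IH1 IH2]]; [split; reflexivity|].
  split.
  - change (Derive (Derive_n (fun t => Re (Fk D z 0 t)) k) = (fun t => Re (Fk D z (S k) t))).
    rewrite IH1. apply functional_extensionality; intros t. apply is_derive_unique. apply RD_Re, RD_Fk; auto.
  - change (Derive (Derive_n (fun t => Im (Fk D z 0 t)) k) = (fun t => Im (Fk D z (S k) t))).
    rewrite IH2. apply functional_extensionality; intros t. apply is_derive_unique. apply RD_Im, RD_Fk; auto.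
Qed.

Lemma ex_derive_n_Fk (D : nat -> C -> C) (HD : forall n z, Cderiv (D n) z (D (S n) z)) z k t :
  ex_derive_n (fun t => Re (Fk D z 0 t)) k t /\ ex_derive_n (fun t => Im (Fk D z 0 t)) k t.
Proof.
  destruct k as [|k]; [split; exact I|].
  change (ex_derive (Derive_n (fun t => Re (Fk D z 0 t)) k) t /\ ex_derive (Derive_n (fun t => Im (Fk D z 0 t)) k) t).
  destruct (Derive_n_Fk D HD z k) as [H1 H2]. rewrite H1, H2. split.
  - exists (Re (Fk D z (S k) t)). apply RD_Re, RD_Fk; auto.
  - exists (Im (Fk D z (S k) t)). apply RD_Im, RD_Fk; auto.
Qed.

Lemma taylor_bound (f : C -> C) (D : nat -> C -> C) (HD0 : forall z, D 0%nat z = f z)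
  (HD : forall n z, Cderiv (D n) z (D (S n) z)) :
  exists M, 0 <= M /\ forall N z, Cmod z <= 1 ->
    Cmod (Cminus (f z) (csum (tterm (fun m => D m (RtoC 0)) z) N)) <= 4 * M / 2 ^ (S N).
Proof.
  destruct (cont_bounded (D 0%nat) (RtoC 0) 3 (fun z => Cderiv_cont _ _ _ (HD _ z))) as [M HM].
  assert (HMp : 0 <= M) by (eapply Rle_trans; [apply Cmod_ge_0|apply (HM (RtoC 0))];
    replace (Cminus (RtoC 0) (RtoC 0)) with (RtoC 0) by ring; rewrite Cmod_0; lra).
  exists M. split; auto. intros N z Hz.
  assert (DB : forall n v, Cmod v <= 1 -> Cmod (D n v) <= 2 * INR (Factorial.fact n) * M / 2 ^ n).
  { intros n v Hv. apply cauchy_est; auto. lra. intros y Hy. apply HM.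
    replace (Cminus y (RtoC 0)) with (Cplus (Cminus y v) v) by ring.
    eapply Rle_trans; [apply Cmod_triangle|]. lra. }
  assert (RB : forall t, 0 <= t <= 1 -> Cmod (Fk D z (S N) t) <= 2 * INR (Factorial.fact (S N)) * M / 2 ^ (S N)).
  { intros t Ht. unfold Fk. rewrite Cmod_mult, Cmod_pow.
    assert (Cmod z ^ S N <= 1) by (rewrite <- (pow1 (S N)); apply pow_incr; split; [apply Cmod_ge_0|auto]).
    assert (Cmod (D (S N) (Cmult (RtoC t) z)) <= 2 * INR (Factorial.fact (S N)) * M / 2 ^ S N).
    { apply DB. rewrite Cmod_mult, Cmod_R, Rabs_right by lra. pose proof (Cmod_ge_0 z). nra. }
    pose proof (pow_le (Cmod z) (S N) (Cmod_ge_0 z)). pose proof (Cmod_ge_0 (D (S N) (Cmult (RtoC t) z))).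
    assert (0 <= 2 * INR (Factorial.fact (S N)) * M / 2 ^ S N).
    { apply Rmult_le_pos. pose proof (pos_INR (Factorial.fact (S N))). nra. left; apply Rinv_0_lt_compat, pow_lt; lra. }
    nra. }
  destruct (Taylor_Lagrange (fun t => Re (Fk D z 0 t)) N 0 1 Rlt_0_1) as [c1 [Hc1 T1]].
  { intros t _ k _. exact (proj1 (ex_derive_n_Fk D HD z k t)). }
  destruct (Taylor_Lagrange (fun t => Im (Fk D z 0 t)) N 0 1 Rlt_0_1) as [c2 [Hc2 T2]].
  { intros t _ k _. exact (proj2 (ex_derive_n_Fk D HD z k t)). }
  assert (DN1 : forall k, Derive_n (fun t => Re (Fk D z 0 t)) k = (fun t => Re (Fk D z k t))) by (intros; apply Derive_n_Fk; auto).
  assert (DN2 : forall k, Derive_n (fun t => Im (Fk D z 0 t)) k = (fun t => Im (Fk D z k t))) by (intros; apply Derive_n_Fk; auto).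
  assert (T1' : Re (Fk D z 0 1) = sum_f_R0 (fun m => (1-0)^m / INR (Factorial.fact m) * Re (Fk D z m 0)) N
     + (1-0)^(S N) / INR (Factorial.fact (S N)) * Re (Fk D z (S N) c1)).
  { rewrite T1. f_equal. apply sum_eq. intros i _. rewrite DN1. reflexivity. rewrite DN1. reflexivity. }
  assert (T2' : Im (Fk D z 0 1) = sum_f_R0 (fun m => (1-0)^m / INR (Factorial.fact m) * Im (Fk D z m 0)) N
     + (1-0)^(S N) / INR (Factorial.fact (S N)) * Im (Fk D z (S N) c2)).
  { rewrite T2. f_equal. apply sum_eq. intros i _. rewrite DN2. reflexivity. rewrite DN2. reflexivity. }
  clear T1 T2. rename T1' into T1. rename T2' into T2.
  assert (F1 : Fk D z 0 1 = f z) by (unfold Fk; rewrite <- HD0; replace (Cmult (RtoC 1) z) with z by ring; simpl Cpow; ring).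
  rewrite F1 in T1, T2.
  eapply Rle_trans; [apply Cmod_le_sum|].
  assert (S1 : Re (Cminus (f z) (csum (tterm (fun m => D m (RtoC 0)) z) N)) =
     (1 - 0) ^ S N / INR (Factorial.fact (S N)) * Re (Fk D z (S N) c1)).
  { replace (Re (Cminus (f z) (csum (tterm (fun m => D m (RtoC 0)) z) N))) with
      (Re (f z) - Re (csum (tterm (fun m => D m (RtoC 0)) z) N)) by (destruct (f z), (csum _ N); simpl; ring).
    rewrite T1, Re_csum.
    assert (sum_f_R0 (fun m => (1 - 0) ^ m / INR (Factorial.fact m) * Re (Fk D z m 0)) N =
            sum_f_R0 (fun m => Re (tterm (fun m0 => D m0 (RtoC 0)) z m)) N).
    { apply sum_eq. intros i _. unfold Fk, tterm. replace (Cmult (RtoC 0) z) with (RtoC 0) by ring.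
      replace (1 - 0) with 1 by ring. rewrite pow1.
      destruct (Cpow z i) as [p q], (D i (RtoC 0)) as [x y]. simpl. field. apply INR_fact_neq_0. }
    lra. }
  assert (S2 : Im (Cminus (f z) (csum (tterm (fun m => D m (RtoC 0)) z) N)) =
     (1 - 0) ^ S N / INR (Factorial.fact (S N)) * Im (Fk D z (S N) c2)).
  { replace (Im (Cminus (f z) (csum (tterm (fun m => D m (RtoC 0)) z) N))) with
      (Im (f z) - Im (csum (tterm (fun m => D m (RtoC 0)) z) N)) by (destruct (f z), (csum _ N); simpl; ring).
    rewrite T2, Im_csum.
    assert (sum_f_R0 (fun m => (1 - 0) ^ m / INR (Factorial.fact m) * Im (Fk D z m 0)) N =
            sum_f_R0 (fun m => Im (tterm (fun m0 => D m0 (RtoC 0)) z m)) N).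
    { apply sum_eq. intros i _. unfold Fk, tterm. replace (Cmult (RtoC 0) z) with (RtoC 0) by ring.
      replace (1 - 0) with 1 by ring. rewrite pow1.
      destruct (Cpow z i) as [p q], (D i (RtoC 0)) as [x y]. simpl. field. apply INR_fact_neq_0. }
    lra. }
  rewrite S1, S2. replace (1 - 0) with 1 by ring. rewrite pow1.
  pose proof (INR_fact_lt_0 (S N)) as Hf.
  assert (B1 : Rabs (1 / INR (Factorial.fact (S N)) * Re (Fk D z (S N) c1)) <= 2 * M / 2 ^ S N).
  { rewrite Rabs_mult, Rabs_right by (left; apply Rdiv_lt_0_compat; lra).
    eapply Rle_trans. apply Rmult_le_compat_l. left; apply Rdiv_lt_0_compat; lra.
    eapply Rle_trans; [apply re_le_Cmod|apply RB; lra]. right. field. repeat split; try apply INR_fact_neq_0; try (apply pow_nonzero; lra). }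
  assert (B2 : Rabs (1 / INR (Factorial.fact (S N)) * Im (Fk D z (S N) c2)) <= 2 * M / 2 ^ S N).
  { rewrite Rabs_mult, Rabs_right by (left; apply Rdiv_lt_0_compat; lra).
    eapply Rle_trans. apply Rmult_le_compat_l. left; apply Rdiv_lt_0_compat; lra.
    eapply Rle_trans; [apply im_le_Cmod|apply RB; lra]. right. field. repeat split; try apply INR_fact_neq_0; try (apply pow_nonzero; lra). }
  replace (4 * M / 2 ^ S N) with (2 * M / 2 ^ S N + 2 * M / 2 ^ S N) by (field; apply pow_nonzero; lra).
  lra.
Qed.

Definition rk (k : nat) : R := INR k / INR (Factorial.fact (2 * k)).

Lemma rk_step N : (2 <= N)%nat -> 20 * rk (S N) <= rk N.
Proof.
  intros HN. unfold rk. replace (2 * S N)%nat with (S (S (2 * N))) by lia.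
  rewrite !fact_simpl, !mult_INR. rewrite !S_INR. rewrite mult_INR. simpl (INR 2). replace (1 + 1) with 2 by ring.
  pose proof (INR_fact_lt_0 (2 * N)). assert (2 <= INR N) by (replace 2 with (INR 2) by reflexivity; apply le_INR; auto).
  set (F := INR (Factorial.fact (2 * N))) in *.
  replace (20 * ((INR N + 1) / ((2 * INR N + 1 + 1) * ((2 * INR N + 1) * F)))) with (10 / ((2 * INR N + 1) * F))
    by (field; split; lra).
  apply Rmult_le_reg_r with ((2 * INR N + 1) * F). apply Rmult_lt_0_compat; lra.
  replace (10 / ((2 * INR N + 1) * F) * ((2 * INR N + 1) * F)) with 10 by (field; repeat split; lra).
  replace (INR N / F * ((2 * INR N + 1) * F)) with (INR N * (2 * INR N + 1)) by (field; repeat split; lra). nra.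
Qed.

Lemma rk_2 : rk 2 = 1 / 12.
Proof. unfold rk. simpl. field. Qed.

Lemma rk_pos k : 0 <= rk k.
Proof. unfold rk. apply Rmult_le_pos. apply pos_INR. left; apply Rinv_0_lt_compat, INR_fact_lt_0. Qed.

Lemma tail_bound (e : nat -> C) (B : R) : 0 <= B -> (forall k, (2 <= k)%nat -> Cmod (e k) <= B * rk k) ->
  forall N, (1 <= N)%nat -> Cmod (Cminus (Cminus (csum e N) (e 0%nat)) (e 1%nat)) <= B / 11.
Proof.
  intros HB He.
  assert (Strong : forall N, (2 <= N)%nat -> Cmod (Cminus (Cminus (csum e N) (e 0%nat)) (e 1%nat)) + B * rk N / 19 <= B / 11).
  { induction N as [|N IH]; intros HN; [lia|].
    destruct (Nat.eq_dec N 1) as [->|HN1].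
    - simpl. replace (Cminus (Cminus (Cplus (Cplus (e 0%nat) (e 1%nat)) (e 2%nat)) (e 0%nat)) (e 1%nat)) with (e 2%nat) by ring.
      pose proof (He 2%nat ltac:(lia)). rewrite rk_2 in *. lra.
    - assert (HN2 : (2 <= N)%nat) by lia. specialize (IH HN2). simpl csum.
      replace (Cminus (Cminus (Cplus (csum e N) (e (S N))) (e 0%nat)) (e 1%nat))
        with (Cplus (Cminus (Cminus (csum e N) (e 0%nat)) (e 1%nat)) (e (S N))) by ring.
      eapply Rle_trans. apply Rplus_le_compat_r. apply Cmod_triangle.
      pose proof (He (S N) ltac:(lia)). pose proof (rk_step N HN2). nra. }
  intros N HN. destruct (Nat.eq_dec N 1) as [->|HN1].
  - simpl. replace (Cminus (Cminus (Cplus (e 0%nat) (e 1%nat)) (e 0%nat)) (e 1%nat)) with (RtoC 0) by ring.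
    rewrite Cmod_0. lra.
  - pose proof (Strong N ltac:(lia)). pose proof (rk_pos N). nra.
Qed.

Lemma pow_diff_bound (u1 u2 : C) k : Cmod u1 <= 1 -> Cmod u2 <= 1 ->
  Cmod (Cminus (Cpow u1 k) (Cpow u2 k)) <= INR k * Cmod (Cminus u1 u2).
Proof.
  intros H1 H2. induction k as [|k IH].
  - simpl. replace (Cminus (RtoC 1) (RtoC 1)) with (RtoC 0) by ring. rewrite Cmod_0. lra.
  - rewrite !Cpow_S. replace (Cminus (Cmult u1 (Cpow u1 k)) (Cmult u2 (Cpow u2 k)))
      with (Cplus (Cmult u1 (Cminus (Cpow u1 k) (Cpow u2 k))) (Cmult (Cminus u1 u2) (Cpow u2 k))) by ring.
    eapply Rle_trans; [apply Cmod_triangle|]. rewrite !Cmod_mult, Cmod_pow, S_INR.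
    pose proof (Cmod_ge_0 u1). pose proof (Cmod_ge_0 (Cminus u1 u2)).
    pose proof (Cmod_ge_0 (Cminus (Cpow u1 k) (Cpow u2 k))).
    assert (Cmod u2 ^ k <= 1) by (rewrite <- (pow1 k); apply pow_incr; split; [apply Cmod_ge_0|auto]).
    pose proof (pow_le (Cmod u2) k (Cmod_ge_0 u2)). nra.
Qed.

Lemma csum_minus g h N : csum (fun k => Cminus (g k) (h k)) N = Cminus (csum g N) (csum h N).
Proof. induction N; simpl; [ring|]. rewrite IHN. ring. Qed.

Lemma csum_ext g h N : (forall k, g k = h k) -> csum g N = csum h N.
Proof. intros H. induction N; simpl; rewrite ?IHN, ?H; auto. Qed.

Definition Eser (a : nat -> C) (u : C) (N : nat) : C :=
  csum (fun k => Cmult (RtoC (/ INR (Factorial.fact (2 * k)))) (Cmult (a (2 * k)%nat) (Cpow u k))) N.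

Lemma Cpow_even z k : Cpow z (2 * k) = Cpow (Cmult z z) k.
Proof. induction k; [reflexivity|]. replace (2 * S k)%nat with (S (S (2 * k))) by lia.
  rewrite !Cpow_S, IHk. ring. Qed.

Lemma Cpow_opp_even z k : Cpow (Copp z) (2 * k) = Cpow z (2 * k).
Proof. rewrite !Cpow_even. f_equal. ring. Qed.

Lemma Cpow_opp_odd z k : Cpow (Copp z) (S (2 * k)) = Copp (Cpow z (S (2 * k))).
Proof. rewrite !Cpow_S, Cpow_opp_even. ring. Qed.

Lemma even_odd_sum a z N :
  Cplus (csum (tterm a z) (S (2 * N))) (csum (tterm a (Copp z)) (S (2 * N))) = Cmult (RtoC 2) (Eser a (Cmult z z) N).
Proof.
  induction N as [|N IH].
  - simpl. unfold tterm, Eser; simpl. ring.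
  - replace (S (2 * S N)) with (S (S (S (2 * N)))) by lia.
    change (csum (tterm a z) (S (S (S (2 * N))))) with
      (Cplus (Cplus (csum (tterm a z) (S (2 * N))) (tterm a z (S (S (2 * N))))) (tterm a z (S (S (S (2 * N)))))).
    change (csum (tterm a (Copp z)) (S (S (S (2 * N))))) with
      (Cplus (Cplus (csum (tterm a (Copp z)) (S (2 * N))) (tterm a (Copp z) (S (S (2 * N))))) (tterm a (Copp z) (S (S (S (2 * N)))))).
    unfold Eser. change (csum (fun k => Cmult (RtoC (/ INR (Factorial.fact (2 * k)))) (Cmult (a (2 * k)%nat) (Cpow (Cmult z z) k))) (S N))
      with (Cplus (Eser a (Cmult z z) N) (Cmult (RtoC (/ INR (Factorial.fact (2 * S N)))) (Cmult (a (2 * S N)%nat) (Cpow (Cmult z z) (S N))))).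
    replace (S (S (2 * N))) with (2 * S N)%nat by lia.
    replace (S (S (S (2 * N)))) with (S (2 * S N)) by lia.
    unfold tterm. rewrite Cpow_opp_even, Cpow_opp_odd, Cpow_even.
    set (A := csum (fun m => Cmult (RtoC (/ INR (Factorial.fact m))) (Cmult (a m) (Cpow z m))) (S (2 * N))).
    set (B := csum (fun m => Cmult (RtoC (/ INR (Factorial.fact m))) (Cmult (a m) (Cpow (Copp z) m))) (S (2 * N))).
    assert (AB : Cplus A B = Cmult (RtoC 2) (Eser a (Cmult z z) N)) by exact IH.
    replace (Cmult (RtoC 2) (Cplus (Eser a (Cmult z z) N) (Cmult (RtoC (/ INR (Factorial.fact (2 * S N)))) (Cmult (a (2 * S N)%nat) (Cpow (Cmult z z) (S N))))))
      with (Cplus (Cmult (RtoC 2) (Eser a (Cmult z z) N)) (Cmult (RtoC 2) (Cmult (RtoC (/ INR (Factorial.fact (2 * S N)))) (Cmult (a (2 * S N)%nat) (Cpow (Cmult z z) (S N)))))) by ring.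
    rewrite <- AB. ring.
Qed.

Lemma pow2_ge_INR n : INR n <= 2 ^ n.
Proof. induction n; [simpl; lra|]. rewrite S_INR. simpl pow. assert (1 <= 2 ^ n) by (apply pow_R1_Rle; lra). lra. Qed.

Lemma limit_le X Y c : 0 <= c -> (forall n, X <= Y + c / 2 ^ n) -> X <= Y.
Proof.
  intros Hc H. destruct (Rle_or_lt X Y) as [|Hlt]; auto. exfalso.
  destruct (archimed (c / (X - Y))) as [Ha _].
  set (z := up (c / (X - Y))) in *.
  assert (Hz : (0 <= z)%Z).
  { apply le_IZR. assert (0 <= c / (X - Y)) by (apply Rmult_le_pos; [auto|left; apply Rinv_0_lt_compat; lra]). lra. }
  set (n := Z.to_nat z). assert (Hn : INR n = IZR z) by (unfold n; rewrite INR_IZR_INZ, Znat.Z2Nat.id; auto).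
  specialize (H n). pose proof (pow2_ge_INR n). pose proof (pow_lt 2 n ltac:(lra)).
  assert (c / 2 ^ n < X - Y).
  { apply Rmult_lt_reg_r with (2 ^ n); auto. unfold Rdiv. rewrite Rmult_assoc, Rinv_l by lra.
    assert (c / (X - Y) < 2 ^ n) by lra.
    apply Rmult_lt_reg_r with (/ (X - Y)). apply Rinv_0_lt_compat; lra.
    rewrite Rmult_1_r. replace ((X - Y) * 2 ^ n * / (X - Y)) with (2 ^ n) by (field; lra). exact H2. }
  lra.
Qed.

Lemma half_double (x : C) : Cmult (RtoC (/2)) (Cplus x x) = x.
Proof. destruct x as [p q]. unfold Cmult, Cplus, RtoC; simpl. f_equal; field. Qed.

Lemma KE (f : C -> C) (D : nat -> C -> C) (HD0 : forall z, D 0%nat z = f z)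
  (HD : forall n z, Cderiv (D n) z (D (S n) z)) (Heven : forall z, f (Copp z) = f z)
  (Hk : forall k, (1 <= k)%nat -> Cmod (D (2 * k)%nat (RtoC 0)) <= 41 / 4) z1 z2 :
  Cmod z1 <= 1 -> Cmod z2 <= 1 ->
  Cmod (Cminus (Cminus (f z1) (f z2)) (Cmult (Cmult (D 2%nat (RtoC 0)) (RtoC (/2))) (Cminus (Cmult z1 z1) (Cmult z2 z2))))
    <= 41 / 44 * Cmod (Cminus (Cmult z1 z1) (Cmult z2 z2)).
Proof.
  intros H1 H2. destruct (taylor_bound f D HD0 HD) as [M [HM HT]].
  set (a := fun m => D m (RtoC 0)).
  assert (EV : forall z N, Cmod z <= 1 -> Cmod (Cminus (f z) (Eser a (Cmult z z) N)) <= 4 * M / 2 ^ (S (S (2 * N)))).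
  { intros z N Hz. pose proof (even_odd_sum a z N) as EO.
    pose proof (HT (S (2 * N)) z Hz) as T1. pose proof (HT (S (2 * N)) (Copp z) ltac:(rewrite Cmod_opp; auto)) as T2.
    rewrite Heven in T2. fold a in T1, T2.
    replace (Cminus (f z) (Eser a (Cmult z z) N)) with
      (Cmult (RtoC (/2)) (Cplus (Cminus (f z) (csum (tterm a z) (S (2 * N)))) (Cminus (f z) (csum (tterm a (Copp z)) (S (2 * N)))))).
    2:{ apply (f_equal (fun x => Cmult (RtoC (/2)) x)) in EO.
        replace (Cmult (RtoC (/ 2)) (Cmult (RtoC 2) (Eser a (Cmult z z) N))) with (Eser a (Cmult z z) N) in EO
          by (rewrite Cmult_assoc, <- RtoC_mult; replace (/2 * 2) with 1 by field; ring).
        rewrite <- EO.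
        transitivity (Cminus (Cmult (RtoC (/2)) (Cplus (f z) (f z))) (Cmult (RtoC (/ 2))
          (Cplus (csum (tterm a z) (S (2 * N))) (csum (tterm a (Copp z)) (S (2 * N)))))). ring.
        rewrite half_double. reflexivity. }
    rewrite Cmod_mult, Cmod_R, Rabs_right by lra.
    eapply Rle_trans. apply Rmult_le_compat_l; [lra|apply Cmod_triangle]. lra. }
  set (u1 := Cmult z1 z1). set (u2 := Cmult z2 z2).
  assert (Hu1 : Cmod u1 <= 1) by (unfold u1; rewrite Cmod_mult; pose proof (Cmod_ge_0 z1); nra).
  assert (Hu2 : Cmod u2 <= 1) by (unfold u2; rewrite Cmod_mult; pose proof (Cmod_ge_0 z2); nra).
  set (e := fun k => Cmult (RtoC (/ INR (Factorial.fact (2 * k)))) (Cmult (a (2 * k)%nat) (Cminus (Cpow u1 k) (Cpow u2 k)))).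
  assert (Ediff : forall N, Cminus (Eser a u1 N) (Eser a u2 N) = csum e N).
  { intros N. unfold Eser. rewrite <- csum_minus. apply csum_ext. intros k. unfold e. ring. }
  set (B := 41 / 4 * Cmod (Cminus u1 u2)).
  assert (TB : forall N, (1 <= N)%nat -> Cmod (Cminus (Cminus (csum e N) (e 0%nat)) (e 1%nat)) <= B / 11).
  { apply tail_bound. unfold B; pose proof (Cmod_ge_0 (Cminus u1 u2)); lra.
    intros k Hk2. unfold e. rewrite !Cmod_mult, Cmod_R. rewrite Rabs_right by (left; apply Rinv_0_lt_compat, INR_fact_lt_0).
    pose proof (Hk k ltac:(lia)) as Ha. fold a in Ha. pose proof (pow_diff_bound u1 u2 k Hu1 Hu2).
    unfold B, rk. pose proof (INR_fact_lt_0 (2 * k)). pose proof (Cmod_ge_0 (a (2 * k)%nat)).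
    pose proof (Cmod_ge_0 (Cminus (Cpow u1 k) (Cpow u2 k))). pose proof (pos_INR k).
    pose proof (Cmod_ge_0 (Cminus u1 u2)).
    assert (Cmod (a (2 * k)%nat) * Cmod (Cminus (Cpow u1 k) (Cpow u2 k)) <= 41 / 4 * (INR k * Cmod (Cminus u1 u2))).
    { apply Rmult_le_compat; auto. }
    assert (0 < / INR (Factorial.fact (2 * k))) by (apply Rinv_0_lt_compat; auto).
    unfold Rdiv. nra. }
  assert (E0 : e 0%nat = RtoC 0) by (unfold e; simpl; ring).
  assert (E1 : e 1%nat = Cmult (Cmult (D 2%nat (RtoC 0)) (RtoC (/2))) (Cminus u1 u2)).
  { unfold e, a. replace (INR (Factorial.fact (2 * 1))) with 2 by (simpl; ring). simpl Cpow.
    replace (2 * 1)%nat with 2%nat by reflexivity. ring. }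
  apply (limit_le _ _ (8 * M)). lra. intros n.
  set (N := S n).
  pose proof (EV z1 N H1) as V1. pose proof (EV z2 N H2) as V2. fold u1 in V1. fold u2 in V2.
  pose proof (TB N ltac:(unfold N; lia)) as T. rewrite E0, E1, <- Ediff in T.
  replace (Cminus (Cminus (f z1) (f z2)) (Cmult (Cmult (D 2%nat (RtoC 0)) (RtoC (/2))) (Cminus u1 u2)))
    with (Cplus (Cplus (Cminus (f z1) (Eser a u1 N)) (Copp (Cminus (f z2) (Eser a u2 N))))
      (Cminus (Cminus (Cminus (Eser a u1 N) (Eser a u2 N)) (RtoC 0)) (Cmult (Cmult (D 2%nat (RtoC 0)) (RtoC (/2))) (Cminus u1 u2)))) by ring.
  eapply Rle_trans; [apply Cmod_triangle|]. eapply Rle_trans; [apply Rplus_le_compat_l; exact T|].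
  eapply Rle_trans; [apply Rplus_le_compat_r; apply Cmod_triangle|]. rewrite Cmod_opp.
  assert (P : 4 * M / 2 ^ S (S (2 * N)) <= 4 * M / 2 ^ n).
  { unfold Rdiv. apply Rmult_le_compat_l; [lra|]. apply Rinv_le_contravar. apply pow_lt; lra.
    apply Rle_pow; [lra|]. unfold N; lia. }
  unfold B in *. lra.
Qed.

Fixpoint itr (T : C -> C) (c : C) (n : nat) : C := match n with O => c | S k => T (itr T c k) end.

Lemma le_eps a b : (forall e, 0 < e -> a < b + e) -> a <= b.
Proof. intros H. destruct (Rle_or_lt a b); auto. specialize (H ((a - b)/2) ltac:(lra)). lra. Qed.

Lemma Cmod_diff_0 (a b : C) : Cmod (Cminus a b) = 0 -> a = b.
Proof. intros H. apply Cmod_eq_0 in H. replace a with (Cplus (Cminus a b) b) by ring. rewrite H. ring. Qed.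

Lemma Cmod_tri3 (a b c : C) : Cmod (Cminus a c) <= Cmod (Cminus a b) + Cmod (Cminus b c).
Proof. replace (Cminus a c) with (Cplus (Cminus a b) (Cminus b c)) by ring. apply Cmod_triangle. Qed.

Lemma Cmod_sym (a b : C) : Cmod (Cminus a b) = Cmod (Cminus b a).
Proof. replace (Cminus a b) with (Copp (Cminus b a)) by ring. apply Cmod_opp. Qed.

Lemma fixed_point (T : C -> C) (c : C) (rho q : R) : 0 <= rho -> 0 <= q < 1 ->
  (forall u, Cmod (Cminus u c) <= rho -> Cmod (Cminus (T u) c) <= rho) ->
  (forall u v, Cmod (Cminus u c) <= rho -> Cmod (Cminus v c) <= rho -> Cmod (Cminus (T u) (T v)) <= q * Cmod (Cminus u v)) ->
  exists u, Cmod (Cminus u c) <= rho /\ T u = u.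
Proof.
  intros Hr Hq Hself Hcon. set (x := itr T c).
  assert (X1 : forall n, Cmod (Cminus (x n) c) <= rho).
  { induction n. change (x 0%nat) with c. replace (Cminus c c) with (RtoC 0) by ring. rewrite Cmod_0; lra.
    change (x (S n)) with (T (x n)). apply Hself; auto. }
  assert (X2 : forall n, Cmod (Cminus (x (S n)) (x n)) <= q ^ n * rho).
  { induction n.
    - change (x 1%nat) with (T c). change (x 0%nat) with c. simpl pow. rewrite Rmult_1_l. apply Hself.
      replace (Cminus c c) with (RtoC 0) by ring. rewrite Cmod_0; lra.
    - change (x (S (S n))) with (T (x (S n))). change (x (S n)) with (T (x n)) at 2.
      eapply Rle_trans. apply Hcon; apply X1. change (T (x n)) with (x (S n)).
      simpl pow. rewrite Rmult_assoc. apply Rmult_le_compat_l; [lra|auto]. }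
  assert (X3 : forall n k, Cmod (Cminus (x (n + k)%nat) (x n)) <= rho * q ^ n * (1 - q ^ k) / (1 - q)).
  { intros n k. induction k.
    - rewrite Nat.add_0_r. replace (Cminus (x n) (x n)) with (RtoC 0) by ring. rewrite Cmod_0.
      simpl. replace (1 - 1) with 0 by ring. unfold Rdiv. rewrite Rmult_0_r, Rmult_0_l. lra.
    - replace (n + S k)%nat with (S (n + k)) by lia.
      eapply Rle_trans. apply (Cmod_tri3 _ (x (n + k)%nat)). eapply Rle_trans.
      apply Rplus_le_compat; [apply X2|apply IHk]. rewrite pow_add.
      right. simpl. field. lra. }
  assert (X4 : forall n m, (n <= m)%nat -> Cmod (Cminus (x m) (x n)) <= rho * q ^ n / (1 - q)).
  { intros n m Hnm. replace m with (n + (m - n))%nat by lia. eapply Rle_trans; [apply X3|].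
    unfold Rdiv. apply Rmult_le_compat_r. left; apply Rinv_0_lt_compat; lra.
    pose proof (pow_le q n ltac:(lra)). pose proof (pow_le q (m - n) ltac:(lra)). assert (0 <= rho * q ^ n) by (apply Rmult_le_pos; lra). assert (0 <= rho * q ^ n * q ^ (m - n)) by (apply Rmult_le_pos; lra). nra. }
  assert (Cau : forall e, 0 < e -> exists N, forall n m, (N <= n)%nat -> (N <= m)%nat -> Cmod (Cminus (x m) (x n)) < e).
  { intros e He. destruct (pow_lt_1_zero q ltac:(rewrite Rabs_right; lra) (e * (1 - q) / (rho + 1))) as [N HN].
    { apply Rdiv_lt_0_compat; [nra|lra]. }
    exists N. intros n m Hn Hm.
    assert (G : forall a b, (N <= a)%nat -> (a <= b)%nat -> Cmod (Cminus (x b) (x a)) < e).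
    { intros a b Ha Hab. eapply Rle_lt_trans; [apply X4; auto|].
      specialize (HN a Ha). rewrite Rabs_right in HN by (apply Rle_ge, pow_le; lra).
      apply Rmult_lt_reg_r with (1 - q); [lra|]. unfold Rdiv. rewrite Rmult_assoc, Rinv_l by lra.
      assert (rho * q ^ a <= (rho + 1) * q ^ a) by (pose proof (pow_le q a ltac:(lra)); nra).
      assert ((rho + 1) * q ^ a < e * (1 - q)).
      { apply Rmult_lt_reg_r with (/ (rho + 1)). apply Rinv_0_lt_compat; lra.
        replace ((rho + 1) * q ^ a * / (rho + 1)) with (q ^ a) by (field; lra). exact HN. }
      lra. }
    destruct (Nat.le_ge_cases n m). apply G; auto. rewrite Cmod_sym. apply G; auto. }
  destruct (Rcomplete.R_complete (fun k : nat => Re (x k))) as [lr Hlr].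
  { intros e He. destruct (Cau e He) as [N HN]. exists N. intros n m Hn Hm. unfold Rdist.
    eapply Rle_lt_trans; [|apply (HN m n); auto].
    replace (Re (x n) - Re (x m)) with (Re (Cminus (x n) (x m))) by (destruct (x n), (x m); simpl; ring).
    apply re_le_Cmod. }
  destruct (Rcomplete.R_complete (fun k : nat => Im (x k))) as [li Hli].
  { intros e He. destruct (Cau e He) as [N HN]. exists N. intros n m Hn Hm. unfold Rdist.
    eapply Rle_lt_trans; [|apply (HN m n); auto].
    replace (Im (x n) - Im (x m)) with (Im (Cminus (x n) (x m))) by (destruct (x n), (x m); simpl; ring).
    apply im_le_Cmod. }
  set (u := (lr, li) : C).
  assert (Lim : forall e, 0 < e -> exists N, forall n, (N <= n)%nat -> Cmod (Cminus (x n) u) < e).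
  { intros e He. destruct (Hlr (e/2) ltac:(lra)) as [N1 H1]. destruct (Hli (e/2) ltac:(lra)) as [N2 H2].
    exists (max N1 N2). intros n Hn. eapply Rle_lt_trans; [apply Cmod_le_sum|].
    specialize (H1 n ltac:(lia)). specialize (H2 n ltac:(lia)). unfold Rdist in H1, H2. cbv beta in H1, H2.
    unfold u. destruct (x n) as [a b]. simpl in *. replace (a + - lr) with (a - lr) by ring. replace (b + - li) with (b - li) by ring. lra. }
  exists u. split.
  - apply le_eps. intros e He. destruct (Lim e He) as [N HN]. specialize (HN N (le_n N)).
    pose proof (Cmod_tri3 u (x N) c). rewrite Cmod_sym in HN. pose proof (X1 N). lra.
  - assert (Hu : Cmod (Cminus u c) <= rho).
    { apply le_eps. intros e He. destruct (Lim e He) as [N HN]. specialize (HN N (le_n N)).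
      pose proof (Cmod_tri3 u (x N) c). rewrite Cmod_sym in HN. pose proof (X1 N). lra. }
    apply Cmod_diff_0. apply Rle_antisym; [|apply Cmod_ge_0].
    apply le_eps. intros e He. rewrite Rplus_0_l. destruct (Lim (e/2) ltac:(lra)) as [N HN].
    pose proof (HN N (le_n N)) as A. pose proof (HN (S N) (le_S _ _ (le_n N))) as B.
    pose proof (Cmod_tri3 (T u) (T (x N)) u) as Tr. change (x (S N)) with (T (x N)) in B.
    pose proof (Hcon u (x N) Hu (X1 N)). rewrite (Cmod_sym u (x N)) in H. 
    assert (q * Cmod (Cminus (x N) u) <= Cmod (Cminus (x N) u)) by (pose proof (Cmod_ge_0 (Cminus (x N) u)); nra).
    lra.
Qed.

Definition sgn (y : R) : R := if Rle_dec 0 y then 1 else -1.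
Definition csqrt (u : C) : C :=
  (sqrt ((Cmod u + Re u) / 2), sgn (Im u) * sqrt ((Cmod u - Re u) / 2)).

Lemma csqrt_sq u : Cmult (csqrt u) (csqrt u) = u.
Proof.
  pose proof (re_le_Cmod u) as Hx. pose proof (Cmod2_alt u) as Hr.
  destruct u as [x y]. unfold csqrt, Cmult. simpl Re in *. simpl Im in *. simpl fst; simpl snd.
  set (r := Cmod (x, y)) in *.
  assert (Hx1 : - r <= x <= r) by (unfold Rabs in Hx; destruct Rcase_abs; lra).
  assert (A : sqrt ((r + x) / 2) * sqrt ((r + x) / 2) = (r + x) / 2) by (apply sqrt_sqrt; lra).
  assert (B : sqrt ((r - x) / 2) * sqrt ((r - x) / 2) = (r - x) / 2) by (apply sqrt_sqrt; lra).
  assert (S2 : sgn y * sgn y = 1) by (unfold sgn; destruct Rle_dec; ring).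
  assert (AB : sqrt ((r + x) / 2) * sqrt ((r - x) / 2) = Rabs y / 2).
  { rewrite <- sqrt_mult by lra. replace ((r + x) / 2 * ((r - x) / 2)) with (Rsqr (y / 2)).
    rewrite sqrt_Rsqr_abs. unfold Rdiv. rewrite Rabs_mult. rewrite (Rabs_right (/2)) by lra. reflexivity.
    unfold Rsqr. simpl in Hr. nra. }
  f_equal.
  - replace (sqrt ((r + x) / 2) * sqrt ((r + x) / 2) - sgn y * sqrt ((r - x) / 2) * (sgn y * sqrt ((r - x) / 2)))
      with (sqrt ((r + x) / 2) * sqrt ((r + x) / 2) - (sgn y * sgn y) * (sqrt ((r - x) / 2) * sqrt ((r - x) / 2))) by ring.
    rewrite A, B, S2. field.
  - replace (sqrt ((r + x) / 2) * (sgn y * sqrt ((r - x) / 2)) + sgn y * sqrt ((r - x) / 2) * sqrt ((r + x) / 2))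
      with (2 * sgn y * (sqrt ((r + x) / 2) * sqrt ((r - x) / 2))) by ring.
    rewrite AB. unfold sgn, Rabs. destruct Rle_dec, Rcase_abs; lra.
Qed.

Lemma Cmult_integral' (a b : C) : Cmult a b = RtoC 0 -> a = RtoC 0 \/ b = RtoC 0.
Proof.
  intros H. destruct (Ceq_dec a (RtoC 0)); auto. destruct (Ceq_dec b (RtoC 0)); auto.
  exfalso. apply (Cmult_neq_0 a b); auto.
Qed.

Lemma sq_eq (w z : C) : Cmult w w = Cmult z z -> w = z \/ w = Copp z.
Proof.
  intros H. assert (Cmult (Cminus w z) (Cplus w z) = RtoC 0).
  { replace (Cmult (Cminus w z) (Cplus w z)) with (Cminus (Cmult w w) (Cmult z z)) by ring. rewrite H. ring. }
  destruct (Cmult_integral' _ _ H0) as [E|E].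
  - left. replace w with (Cplus (Cminus w z) z) by ring. rewrite E. ring.
  - right. replace w with (Cminus (Cplus w z) z) by ring. rewrite E. ring.
Qed.

Lemma Cmod_sq (z : C) : Cmod (Cmult z z) = Cmod z * Cmod z.
Proof. apply Cmod_mult. Qed.

Lemma Cmod_csqrt u : Cmod (csqrt u) * Cmod (csqrt u) = Cmod u.
Proof. rewrite <- Cmod_sq, csqrt_sq. reflexivity. Qed.

Lemma csqrt_le1 u : Cmod u <= 1 -> Cmod (csqrt u) <= 1.
Proof. intros H. pose proof (Cmod_csqrt u). pose proof (Cmod_ge_0 (csqrt u)). nra. Qed.
Lemma csqrt_lt1 u : Cmod u < 1 -> Cmod (csqrt u) < 1.
Proof. intros H. pose proof (Cmod_csqrt u). pose proof (Cmod_ge_0 (csqrt u)). nra. Qed.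

Lemma csqrt_0 : csqrt (RtoC 0) = RtoC 0.
Proof. pose proof (Cmod_csqrt (RtoC 0)). rewrite Cmod_0 in H.
  assert (Cmod (csqrt (RtoC 0)) = 0) by (pose proof (Cmod_ge_0 (csqrt (RtoC 0))); nra).
  apply Cmod_eq_0 in H0. exact H0. Qed.

Lemma Cmod_lin_comb (a b : C) t : 0 <= t <= 1 -> Cmod a < 1 -> Cmod b < 1 ->
  Cmod (Cplus (Cmult (RtoC (1 - t)) a) (Cmult (RtoC t) b)) < 1.
Proof.
  intros Ht Ha Hb. eapply Rle_lt_trans; [apply Cmod_triangle|]. rewrite !Cmod_mult, !Cmod_R.
  rewrite (Rabs_right (1 - t)) by lra. rewrite (Rabs_right t) by lra.
  destruct (Req_dec t 0) as [->|Hn]. lra. assert (0 < t) by lra. nra.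
Qed.

Lemma sc_transfer (W : C -> Prop) (Phi Psi : C -> C) (A B : R) :
  0 < A -> 0 < B ->
  (forall u, Cmod u < 1 -> W (Phi u)) ->
  (forall w, W w -> Cmod (Psi w) < 1) ->
  (forall w, W w -> Phi (Psi w) = w) ->
  (forall u v, Cmod u < 1 -> Cmod v < 1 -> Cmod (Cminus (Phi u) (Phi v)) <= A * Cmod (Cminus u v)) ->
  (forall w1 w2, W w1 -> W w2 -> Cmod (Cminus (Psi w1) (Psi w2)) <= B * Cmod (Cminus w1 w2)) ->
  simply_connectedC W.
Proof.
  intros HA HB HPhi HPsi Hinv LPhi LPsi. split.
  - intros a b Ha Hb.
    set (g := fun t => Phi (Cplus (Cmult (RtoC (1 - t)) (Psi a)) (Cmult (RtoC t) (Psi b)))).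
    exists g. split; [split|split].
    + intros t Ht. apply HPhi. apply Cmod_lin_comb; auto.
    + intros t e Ht He. exists (e / (2 * A + 1)). split. apply Rdiv_lt_0_compat; lra.
      intros t' Ht' Hd. unfold g. eapply Rle_lt_trans. apply LPhi; apply Cmod_lin_comb; auto.
      replace (Cminus (Cplus (Cmult (RtoC (1 - t')) (Psi a)) (Cmult (RtoC t') (Psi b)))
                      (Cplus (Cmult (RtoC (1 - t)) (Psi a)) (Cmult (RtoC t) (Psi b))))
        with (Cmult (RtoC (t' - t)) (Cminus (Psi b) (Psi a)))
        by (unfold RtoC, Cminus, Cplus, Cmult, Copp; simpl; f_equal; ring).
      rewrite Cmod_mult, Cmod_R.
      assert (Cmod (Cminus (Psi b) (Psi a)) <= 2).
      { eapply Rle_trans; [apply Cmod_triangle|]. rewrite Cmod_opp. pose proof (HPsi a Ha). pose proof (HPsi b Hb). lra. }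
      pose proof (Rabs_pos (t' - t)). pose proof (Cmod_ge_0 (Cminus (Psi b) (Psi a))).
      assert (Rabs (t' - t) * (2 * A + 1) < e).
      { apply Rmult_lt_reg_r with (/ (2 * A + 1)). apply Rinv_0_lt_compat; lra.
        rewrite Rmult_assoc, Rinv_r by lra. rewrite Rmult_1_r. exact Hd. }
      assert (Rabs (t' - t) * Cmod (Cminus (Psi b) (Psi a)) <= Rabs (t' - t) * 2) by (apply Rmult_le_compat_l; lra).
      assert (A * (Rabs (t' - t) * Cmod (Cminus (Psi b) (Psi a))) <= A * (Rabs (t' - t) * 2)) by (apply Rmult_le_compat_l; lra).
      nra.
    + unfold g. replace (Cplus (Cmult (RtoC (1 - 0)) (Psi a)) (Cmult (RtoC 0) (Psi b))) with (Psi a)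
        by (unfold RtoC, Cminus, Cplus, Cmult, Copp; destruct (Psi a), (Psi b); simpl; f_equal; ring).
      auto.
    + unfold g. replace (Cplus (Cmult (RtoC (1 - 1)) (Psi a)) (Cmult (RtoC 1) (Psi b))) with (Psi b)
        by (unfold RtoC, Cminus, Cplus, Cmult, Copp; destruct (Psi a), (Psi b); simpl; f_equal; ring).
      auto.
  - intros g [Hg Hgc] Hg01.
    set (H := fun s t => Phi (Cmult (RtoC (1 - s)) (Psi (g t)))).
    assert (Hin : forall s t, I01 s -> I01 t -> Cmod (Cmult (RtoC (1 - s)) (Psi (g t))) < 1).
    { intros s t Hs Ht. rewrite Cmod_mult, Cmod_R. unfold I01 in Hs. rewrite Rabs_right by lra.
      pose proof (HPsi _ (Hg t Ht)). pose proof (Cmod_ge_0 (Psi (g t))). nra. }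
    exists H. split; [split|split; [|split]].
    + intros s t Hs Ht. apply HPhi. auto.
    + intros s t e Hs Ht He.
      destruct (Hgc t (e / (2 * A * B + 1)) Ht) as [d1 [Hd1 Hg1]]. { apply Rdiv_lt_0_compat; nra. }
      exists (Rmin d1 (e / (2 * A + 1))). split. { apply Rmin_pos; auto. apply Rdiv_lt_0_compat; lra. }
      intros s' t' Hs' Ht' Hds Hdt. unfold H. eapply Rle_lt_trans. apply LPhi; apply Hin; auto.
      replace (Cminus (Cmult (RtoC (1 - s')) (Psi (g t'))) (Cmult (RtoC (1 - s)) (Psi (g t))))
        with (Cplus (Cmult (RtoC (1 - s')) (Cminus (Psi (g t')) (Psi (g t)))) (Cmult (RtoC (s - s')) (Psi (g t))))
        by (unfold RtoC, Cminus, Cplus, Cmult, Copp; destruct (Psi (g t')), (Psi (g t)); simpl; f_equal; ring).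
      assert (X : Cmod (Cplus (Cmult (RtoC (1 - s')) (Cminus (Psi (g t')) (Psi (g t)))) (Cmult (RtoC (s - s')) (Psi (g t))))
        <= B * Cmod (Cminus (g t') (g t)) + Rabs (s - s')).
      { eapply Rle_trans; [apply Cmod_triangle|]. rewrite !Cmod_mult, !Cmod_R.
        unfold I01 in Hs'. rewrite (Rabs_right (1 - s')) by lra.
        pose proof (LPsi (g t') (g t) (Hg t' Ht') (Hg t Ht)). pose proof (HPsi _ (Hg t Ht)).
        pose proof (Cmod_ge_0 (Cminus (Psi (g t')) (Psi (g t)))). pose proof (Rabs_pos (s - s')).
        pose proof (Cmod_ge_0 (Psi (g t))). nra. }
      assert (Y1 : Cmod (Cminus (g t') (g t)) < e / (2 * A * B + 1)).
      { apply Hg1; auto. eapply Rlt_le_trans; [exact Hdt|apply Rmin_l]. }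
      assert (Y2 : Rabs (s - s') < e / (2 * A + 1)).
      { rewrite Rabs_minus_sym. eapply Rlt_le_trans; [exact Hds|apply Rmin_r]. }
      assert (Z1 : A * B * (e / (2 * A * B + 1)) <= e / 2).
      { unfold Rdiv. apply Rmult_le_reg_r with (2 * A * B + 1). nra.
        replace (A * B * (e * / (2 * A * B + 1)) * (2 * A * B + 1)) with (A * B * e) by (field; nra).
        replace (e * / 2 * (2 * A * B + 1)) with (A * B * e + e / 2) by field. lra. }
      assert (Z2 : A * (e / (2 * A + 1)) <= e / 2).
      { unfold Rdiv. apply Rmult_le_reg_r with (2 * A + 1). nra.
        replace (A * (e * / (2 * A + 1)) * (2 * A + 1)) with (A * e) by (field; nra).
        replace (e * / 2 * (2 * A + 1)) with (A * e + e / 2) by field. lra. }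
      pose proof (Cmod_ge_0 (Cminus (g t') (g t))). pose proof (Rabs_pos (s - s')).
      assert (A * (B * Cmod (Cminus (g t') (g t)) + Rabs (s - s')) < e).
      { assert (A * B * Cmod (Cminus (g t') (g t)) < A * B * (e / (2 * A * B + 1))) by (apply Rmult_lt_compat_l; nra).
        assert (A * Rabs (s - s') < A * (e / (2 * A + 1))) by (apply Rmult_lt_compat_l; lra).
        nra. }
      apply Rle_lt_trans with (A * (B * Cmod (Cminus (g t') (g t)) + Rabs (s - s'))); auto.
      apply Rmult_le_compat_l; lra.
    + intros t Ht. unfold H. replace (Cmult (RtoC (1 - 0)) (Psi (g t))) with (Psi (g t))
        by (unfold RtoC, Cmult; destruct (Psi (g t)); simpl; f_equal; ring). apply Hinv, Hg, Ht.
    + intros t Ht. unfold H. replace (RtoC (1 - 1)) with (RtoC 0) by (f_equal; ring).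
      rewrite !Cmult_0_l. reflexivity.
    + intros s Hs. unfold H. rewrite Hg01. reflexivity.
Qed.

Definition Good (f : C -> C) (L : C) (D : nat -> C -> C) : Prop :=
  (forall z, D 0%nat z = f z) /\ (forall n z, Cderiv (D n) z (D (S n) z)) /\ (forall z, f (Copp z) = f z) /\
  (forall z1 z2, Cmod z1 <= 1 -> Cmod z2 <= 1 ->
     Cmod (Cminus (Cminus (f z1) (f z2)) (Cmult L (Cminus (Cmult z1 z1) (Cmult z2 z2))))
       <= 41 / 44 * Cmod (Cminus (Cmult z1 z1) (Cmult z2 z2))) /\
  39 / 8 <= Cmod L /\ Cmod L <= 41 / 8 /\ Cmod (f (RtoC 0)) <= 9 / 4 /\ D 2%nat (RtoC 0) <> RtoC 0.

Definition Gf (f : C -> C) (u : C) : C := f (csqrt u).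


Lemma f_eq_G f L D (HG : Good f L D) z : f z = Gf f (Cmult z z).
Proof.
  destruct HG as [_ [_ [Hev _]]]. unfold Gf. destruct (sq_eq (csqrt (Cmult z z)) z (csqrt_sq _)) as [->| ->]; auto.
Qed.

Lemma Gf_KE f L D (HG : Good f L D) u1 u2 : Cmod u1 <= 1 -> Cmod u2 <= 1 ->
  Cmod (Cminus (Cminus (Gf f u1) (Gf f u2)) (Cmult L (Cminus u1 u2))) <= 41 / 44 * Cmod (Cminus u1 u2).
Proof.
  intros H1 H2. destruct HG as [_ [_ [_ [K _]]]]. unfold Gf.
  pose proof (K (csqrt u1) (csqrt u2) (csqrt_le1 _ H1) (csqrt_le1 _ H2)). rewrite !csqrt_sq in H. exact H.
Qed.

Lemma Gf_lower f L D (HG : Good f L D) u1 u2 : Cmod u1 <= 1 -> Cmod u2 <= 1 ->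
  347 / 88 * Cmod (Cminus u1 u2) <= Cmod (Cminus (Gf f u1) (Gf f u2)).
Proof.
  intros H1 H2. pose proof (Gf_KE f L D HG u1 u2 H1 H2) as K. destruct HG as [_ [_ [_ [_ [HL _]]]]].
  assert (Cmod (Cmult L (Cminus u1 u2)) <= Cmod (Cminus (Gf f u1) (Gf f u2)) + Cmod (Cminus (Cminus (Gf f u1) (Gf f u2)) (Cmult L (Cminus u1 u2)))).
  { replace (Cmult L (Cminus u1 u2)) with (Cminus (Cminus (Gf f u1) (Gf f u2)) (Cminus (Cminus (Gf f u1) (Gf f u2)) (Cmult L (Cminus u1 u2)))) at 1 by ring.
    eapply Rle_trans; [apply Cmod_triangle|]. rewrite Cmod_opp. lra. }
  rewrite Cmod_mult in H. pose proof (Cmod_ge_0 (Cminus u1 u2)). nra.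
Qed.

Lemma Gf_upper f L D (HG : Good f L D) u1 u2 : Cmod u1 <= 1 -> Cmod u2 <= 1 ->
  Cmod (Cminus (Gf f u1) (Gf f u2)) <= 7 * Cmod (Cminus u1 u2).
Proof.
  intros H1 H2. pose proof (Gf_KE f L D HG u1 u2 H1 H2) as K. destruct HG as [_ [_ [_ [_ [_ [HL _]]]]]].
  replace (Cminus (Gf f u1) (Gf f u2)) with (Cplus (Cminus (Cminus (Gf f u1) (Gf f u2)) (Cmult L (Cminus u1 u2))) (Cmult L (Cminus u1 u2))) by ring.
  eapply Rle_trans; [apply Cmod_triangle|]. rewrite Cmod_mult. pose proof (Cmod_ge_0 (Cminus u1 u2)). nra.
Qed.

Lemma f_sq_inj f L D (HG : Good f L D) z1 z2 : Cmod z1 <= 1 -> Cmod z2 <= 1 -> f z1 = f z2 -> Cmult z1 z1 = Cmult z2 z2.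
Proof.
  intros H1 H2 E. rewrite (f_eq_G f L D HG z1), (f_eq_G f L D HG z2) in E.
  assert (A1 : Cmod (Cmult z1 z1) <= 1) by (rewrite Cmod_mult; pose proof (Cmod_ge_0 z1); nra).
  assert (A2 : Cmod (Cmult z2 z2) <= 1) by (rewrite Cmod_mult; pose proof (Cmod_ge_0 z2); nra).
  pose proof (Gf_lower f L D HG _ _ A1 A2). rewrite E in H.
  replace (Cminus (Gf f (Cmult z2 z2)) (Gf f (Cmult z2 z2))) with (RtoC 0) in H by ring. rewrite Cmod_0 in H.
  apply Cmod_diff_0. pose proof (Cmod_ge_0 (Cminus (Cmult z1 z1) (Cmult z2 z2))). lra.
Qed.

Lemma L_nz f L D (HG : Good f L D) : L <> RtoC 0.
Proof. destruct HG as [_ [_ [_ [_ [HL _]]]]]. intros ->. rewrite Cmod_0 in HL. lra. Qed.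

Lemma solve f L D (HG : Good f L D) c rho w : 0 <= rho -> Cmod c + rho <= 1 ->
  Cmod (Cminus w (Gf f c)) <= 4 / 5 * Cmod L * rho ->
  exists u, Cmod (Cminus u c) <= rho /\ Gf f u = w.
Proof.
  intros Hr Hc Hw. pose proof (L_nz f L D HG) as Lnz.
  assert (HL : 39 / 8 <= Cmod L) by apply HG.
  set (T := fun u => Cminus u (Cmult (Cinv L) (Cminus (Gf f u) w))).
  assert (Ball : forall u, Cmod (Cminus u c) <= rho -> Cmod u <= 1).
  { intros u Hu. replace u with (Cplus (Cminus u c) c) by ring. eapply Rle_trans; [apply Cmod_triangle|]. lra. }
  assert (Hc1 : Cmod c <= 1) by lra.
  assert (Con : forall u v, Cmod (Cminus u c) <= rho -> Cmod (Cminus v c) <= rho ->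
     Cmod (Cminus (T u) (T v)) <= 1 / 5 * Cmod (Cminus u v)).
  { intros u v Hu Hv. unfold T.
    replace (Cminus (Cminus u (Cmult (Cinv L) (Cminus (Gf f u) w))) (Cminus v (Cmult (Cinv L) (Cminus (Gf f v) w))))
      with (Cmult (Cinv L) (Copp (Cminus (Cminus (Gf f u) (Gf f v)) (Cmult L (Cminus u v))))) by (field; auto).
    rewrite Cmod_mult, Cmod_opp, Cmod_inv by auto.
    pose proof (Gf_KE f L D HG u v (Ball u Hu) (Ball v Hv)). pose proof (Cmod_ge_0 (Cminus u v)).
    apply Rmult_le_reg_l with (Cmod L). lra. rewrite <- Rmult_assoc, Rinv_r by lra. nra. }
  destruct (fixed_point T c rho (1/5) Hr ltac:(lra)) as [u [Hu Tu]].
  - intros u Hu. eapply Rle_trans. apply (Cmod_tri3 _ (T c)). eapply Rle_trans.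
    apply Rplus_le_compat_r. apply Con; auto. replace (Cminus c c) with (RtoC 0) by ring. rewrite Cmod_0; lra.
    unfold T at 1. replace (Cminus (Cminus c (Cmult (Cinv L) (Cminus (Gf f c) w))) c) with (Cmult (Cinv L) (Cminus w (Gf f c))) by ring.
    rewrite Cmod_mult, Cmod_inv by auto.
    assert (/ Cmod L * Cmod (Cminus w (Gf f c)) <= 4 / 5 * rho).
    { apply Rmult_le_reg_l with (Cmod L). lra. rewrite <- Rmult_assoc, Rinv_r by lra. lra. }
    lra.
  - exact Con.
  - exists u. split; auto. unfold T in Tu.
    assert (Cmult (Cinv L) (Cminus (Gf f u) w) = RtoC 0).
    { replace (Cmult (Cinv L) (Cminus (Gf f u) w)) with (Cminus u (Cminus u (Cmult (Cinv L) (Cminus (Gf f u) w)))) by ring.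
      rewrite Tu. ring. }
    apply Cmult_integral' in H. destruct H as [H|H].
    + exfalso. apply (Cinv_r L) in Lnz. rewrite H in Lnz. rewrite Cmult_0_r in Lnz. apply C1_nz. auto.
    + apply Cmod_diff_0. rewrite H, Cmod_0. reflexivity.
Qed.

Lemma W_char f L D (HG : Good f L D) w :
  image_of f unit_disk w <-> exists u, Cmod u < 1 /\ Gf f u = w.
Proof.
  split.
  - intros [z [Hz <-]]. exists (Cmult z z). split. unfold unit_disk in Hz. rewrite Cmod_mult. pose proof (Cmod_ge_0 z). nra.
    symmetry. apply (f_eq_G f L D HG).
  - intros [u [Hu <-]]. exists (csqrt u). split; auto. apply csqrt_lt1; auto.
Qed.

Lemma disk_in_W f L D (HG : Good f L D) w : Cmod w <= 1 -> image_of f unit_disk w.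
Proof.
  intros Hw. apply (W_char f L D HG).
  assert (H0 : Cmod (f (RtoC 0)) <= 9 / 4) by apply HG.
  assert (HL : 39 / 8 <= Cmod L) by apply HG.
  destruct (solve f L D HG (RtoC 0) (5/6) w ltac:(lra)) as [u [Hu Gu]].
  - rewrite Cmod_0. lra.
  - unfold Gf. rewrite csqrt_0. eapply Rle_trans; [apply Cmod_triangle|]. rewrite Cmod_opp. nra.
  - exists u. split; auto. replace (Cminus u (RtoC 0)) with u in Hu by ring. lra.
Qed.

Lemma open_W f L D (HG : Good f L D) : openC (image_of f unit_disk).
Proof.
  intros w Hw. apply (W_char f L D HG) in Hw. destruct Hw as [u0 [Hu0 Gu0]].
  assert (HL : 39 / 8 <= Cmod L) by apply HG.
  set (rho := (1 - Cmod u0) / 2). assert (Hr : 0 < rho) by (unfold rho; lra).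
  exists (4 / 5 * Cmod L * rho). split. nra.
  intros y Hy. apply (W_char f L D HG).
  destruct (solve f L D HG u0 rho y ltac:(lra) ltac:(unfold rho; lra)) as [u [Hu Gu]].
  - rewrite Gu0. lra.
  - exists u. split; auto. replace u with (Cplus (Cminus u u0) u0) by ring.
    eapply Rle_lt_trans; [apply Cmod_triangle|]. unfold rho in *. lra.
Qed.

Definition Ginv (f : C -> C) (w : C) : C :=
  epsilon (inhabits (RtoC 0)) (fun u => Cmod u < 1 /\ Gf f u = w).

Lemma Ginv_spec f L D (HG : Good f L D) w : image_of f unit_disk w -> Cmod (Ginv f w) < 1 /\ Gf f (Ginv f w) = w.
Proof. intros H. apply (W_char f L D HG) in H. unfold Ginv. apply epsilon_spec. exact H. Qed.

Lemma sc_W f L D (HG : Good f L D) : simply_connectedC (image_of f unit_disk).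
Proof.
  apply (sc_transfer _ (Gf f) (Ginv f) 7 (88 / 347)); try lra.
  - intros u Hu. apply (W_char f L D HG). exists u; auto.
  - intros w Hw. apply (Ginv_spec f L D HG w Hw).
  - intros w Hw. apply (Ginv_spec f L D HG w Hw).
  - intros u v Hu Hv. apply (Gf_upper f L D HG); lra.
  - intros w1 w2 H1 H2. destruct (Ginv_spec f L D HG w1 H1) as [A1 B1]. destruct (Ginv_spec f L D HG w2 H2) as [A2 B2].
    pose proof (Gf_lower f L D HG (Ginv f w1) (Ginv f w2) ltac:(lra) ltac:(lra)). rewrite B1, B2 in H. lra.
Qed.

Lemma sc_V : simply_connectedC unit_disk.
Proof.
  apply (sc_transfer _ (fun u => u) (fun u => u) 1 1); try lra; auto.
  intros; lra. intros; lra.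
Qed.

Lemma closure_char z : closureC unit_disk z <-> Cmod z <= 1.
Proof.
  split.
  - intros H. destruct (Rle_or_lt (Cmod z) 1) as [|Hz]; auto. exfalso.
    destruct (H (Cmod z - 1) ltac:(lra)) as [y [Hy Hyz]]. unfold unit_disk in Hy.
    pose proof (Cmod_tri3 z y (RtoC 0)). replace (Cminus z (RtoC 0)) with z in H0 by ring.
    replace (Cminus y (RtoC 0)) with y in H0 by ring. rewrite Cmod_sym in Hyz. lra.
  - intros Hz e He. set (s := Rmin e 1 / 2).
    assert (Hs : 0 < s /\ s <= 1/2 /\ s < e) by (unfold s; pose proof (Rmin_l e 1); pose proof (Rmin_r e 1);
      assert (0 < Rmin e 1) by (apply Rmin_pos; lra); repeat split; lra).
    exists (Cmult (RtoC (1 - s)) z). split.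
    + unfold unit_disk. rewrite Cmod_mult, Cmod_R, Rabs_right by lra. pose proof (Cmod_ge_0 z). nra.
    + replace (Cminus (Cmult (RtoC (1 - s)) z) z) with (Cmult (RtoC (- s)) z)
        by (unfold RtoC, Cmult, Cminus, Cplus, Copp; destruct z; simpl; f_equal; ring).
      rewrite Cmod_mult, Cmod_R, Rabs_left by lra. pose proof (Cmod_ge_0 z). nra.
Qed.

Lemma compactC_ext (K1 K2 : C -> Prop) : (forall z, K1 z <-> K2 z) -> compactC K1 -> compactC K2.
Proof.
  intros E H I O Ho Hc. destruct (H I O Ho) as [l Hl]. intros z Hz; apply Hc, E, Hz.
  exists l. intros z Hz. apply Hl, E, Hz.
Qed.

Lemma compact_closure : compactC (closureC unit_disk).
Proof.
  apply (compactC_ext (fun z => Cmod (Cminus z (RtoC 0)) <= 1)); [|apply compact_disk].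
  intros z. rewrite closure_char. replace (Cminus z (RtoC 0)) with z by ring. tauto.
Qed.

Lemma compact_closed (K : C -> Prop) : compactC K -> forall y, ~ K y ->
  exists e, 0 < e /\ forall x, Cmod (Cminus x y) < e -> ~ K x.
Proof.
  intros HK y Hy.
  destruct (HK nat (fun n x => / INR (S n) < Cmod (Cminus x y))) as [l Hl].
  - intros n x Hx. exists (Cmod (Cminus x y) - / INR (S n)). split. lra.
    intros x' Hx'. pose proof (Cmod_tri3 x x' y). rewrite Cmod_sym in Hx'. lra.
  - intros x Hx. assert (x <> y) by (intros ->; auto).
    assert (P : 0 < Cmod (Cminus x y)) by (apply Cmod_gt_0; intros E; apply H; apply Cmod_diff_0; rewrite E, Cmod_0; auto).
    destruct (archimed (/ Cmod (Cminus x y))) as [Ha _].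
    exists (Z.to_nat (up (/ Cmod (Cminus x y)))).
    rewrite S_INR, INR_IZR_INZ, Znat.Z2Nat.id.
    + apply Rlt_le_trans with (/ / Cmod (Cminus x y)). apply Rinv_lt_contravar.
      apply Rmult_lt_0_compat. apply Rinv_0_lt_compat; auto. pose proof (Rinv_0_lt_compat _ P). lra. lra.
      rewrite Rinv_inv. lra.
    + apply le_IZR. pose proof (Rinv_0_lt_compat _ P). lra.
  - set (N := fold_right max 0%nat l).
    assert (HN : forall n, In n l -> (n <= N)%nat).
    { intros n Hn. unfold N. clear Hl. induction l; simpl in *; [tauto|]. destruct Hn as [->|Hn]; [lia|].
      specialize (IHl Hn). lia. }
    exists (/ INR (S N)). split. apply Rinv_0_lt_compat, lt_0_INR; lia.
    intros x Hx HKx. destruct (Hl x HKx) as [n [Hn1 Hn2]].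
    assert (/ INR (S N) <= / INR (S n)).
    { apply Rinv_le_contravar. apply lt_0_INR; lia. apply le_INR. specialize (HN n Hn1). lia. }
    lra.
Qed.

Lemma f_deriv f L D (HG : Good f L D) z : Cderiv f z (D 1%nat z).
Proof. destruct HG as [H0 [HD _]]. apply Cderiv_ext with (D 0%nat). auto. apply HD. Qed.

Lemma f_cont f L D (HG : Good f L D) z : Ccont f z.
Proof. eapply Cderiv_cont, f_deriv; eauto. Qed.

Lemma f_lower f L D (HG : Good f L D) z1 z2 : Cmod z1 <= 1 -> Cmod z2 <= 1 ->
  347 / 88 * Cmod (Cminus (Cmult z1 z1) (Cmult z2 z2)) <= Cmod (Cminus (f z1) (f z2)).
Proof.
  intros H1 H2. rewrite (f_eq_G f L D HG z1), (f_eq_G f L D HG z2). apply (Gf_lower f L D HG).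
  rewrite Cmod_mult; pose proof (Cmod_ge_0 z1); nra. rewrite Cmod_mult; pose proof (Cmod_ge_0 z2); nra.
Qed.

Lemma D1_0 f L D (HG : Good f L D) : D 1%nat (RtoC 0) = RtoC 0.
Proof.
  pose proof (f_deriv f L D HG (RtoC 0)) as Hd. destruct HG as [_ [_ [Hev _]]].
  set (l := D 1%nat (RtoC 0)) in *.
  apply Cmod_eq_0. apply Rle_antisym; [|apply Cmod_ge_0]. apply le_eps. intros e He. rewrite Rplus_0_l.
  destruct (Cderiv_eps f (RtoC 0) l Hd (e/2) ltac:(lra)) as [d [Hdp H]].
  set (h := RtoC (d / 2)). assert (Hh : Cmod h = d / 2) by (unfold h; rewrite Cmod_R, Rabs_right; lra).
  pose proof (H h ltac:(replace (Cminus h (RtoC 0)) with h by ring; lra)) as A.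
  pose proof (H (Copp h) ltac:(replace (Cminus (Copp h) (RtoC 0)) with (Copp h) by ring; rewrite Cmod_opp; lra)) as B.
  rewrite Hev in B.
  replace (Cminus (Copp h) (RtoC 0)) with (Copp h) in B by ring. replace (Cminus h (RtoC 0)) with h in A by ring.
  rewrite Cmod_opp in B.
  assert (Cmod (Cmult (RtoC 2) (Cmult h l)) <= e / 2 * Cmod h + e / 2 * Cmod h).
  { replace (Cmult (RtoC 2) (Cmult h l)) with (Cminus (Cminus (Cminus (f h) (f (RtoC 0))) (Cmult (Copp h) l)) (Cminus (Cminus (f h) (f (RtoC 0))) (Cmult h l))) by ring.
    eapply Rle_trans; [apply Cmod_triangle|]. rewrite Cmod_opp. lra. }
  rewrite !Cmod_mult, Cmod_R, Rabs_right in H0 by lra. rewrite Hh in H0. nra.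
Qed.

Lemma D1_nz f L D (HG : Good f L D) z : z <> RtoC 0 -> Cmod z < 1 -> D 1%nat z <> RtoC 0.
Proof.
  intros Hz0 Hz1 E. pose proof (f_deriv f L D HG z) as Hd. rewrite E in Hd.
  assert (Pz : 0 < Cmod z) by (apply Cmod_gt_0; auto).
  set (c1 := 347 / 88).
  destruct (Cderiv_eps f z (RtoC 0) Hd (c1 * Cmod z / 2)) as [d [Hdp H]]. { unfold c1. nra. }
  set (s := Rmin (1/2) (d / (2 * Cmod z))).
  assert (Hs : 0 < s /\ s <= 1/2 /\ s <= d / (2 * Cmod z)).
  { unfold s. pose proof (Rmin_l (1/2) (d / (2 * Cmod z))). pose proof (Rmin_r (1/2) (d / (2 * Cmod z))).
    assert (0 < Rmin (1/2) (d / (2 * Cmod z))) by (apply Rmin_pos; [lra|apply Rdiv_lt_0_compat; lra]). lra. }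
  set (y := Cmult (RtoC (1 - s)) z).
  assert (Eyz : Cminus y z = Cmult (RtoC (- s)) z) by (unfold y, RtoC, Cmult, Cminus, Cplus, Copp; destruct z; simpl; f_equal; ring).
  assert (Hyz : Cmod (Cminus y z) = s * Cmod z) by (rewrite Eyz, Cmod_mult, Cmod_R, Rabs_left; lra).
  assert (Hsz : s * Cmod z <= d / 2).
  { assert (s * Cmod z <= d / (2 * Cmod z) * Cmod z) by (apply Rmult_le_compat_r; lra).
    replace (d / (2 * Cmod z) * Cmod z) with (d / 2) in H0 by (field; lra). lra. }
  specialize (H y ltac:(lra)). rewrite Hyz in H.
  replace (Cminus (Cminus (f y) (f z)) (Cmult (Cminus y z) (RtoC 0))) with (Cminus (f y) (f z)) in H by ring.
  assert (Hy1 : Cmod y <= 1) by (unfold y; rewrite Cmod_mult, Cmod_R, Rabs_right by lra; nra).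
  pose proof (f_lower f L D HG y z Hy1 ltac:(lra)) as Lo.
  assert (Eyy : Cminus (Cmult y y) (Cmult z z) = Cmult (RtoC (s * s - 2 * s)) (Cmult z z))
    by (unfold y, RtoC, Cmult, Cminus, Cplus, Copp; destruct z; simpl; f_equal; ring).
  rewrite Eyy, Cmod_mult, Cmod_R, Cmod_mult, Rabs_left in Lo by nra.
  fold c1 in Lo.
  assert (c1 * (- (s * s - 2 * s) * (Cmod z * Cmod z)) <= c1 * Cmod z / 2 * (s * Cmod z)) by lra.
  assert (0 < c1) by (unfold c1; lra).
  set (A := c1 * (Cmod z * Cmod z)).
  assert (HA : 0 < A) by (unfold A; apply Rmult_lt_0_compat; nra).
  assert (A * (3 / 2 * s - s * s) <= 0).
  { replace (A * (3 / 2 * s - s * s)) with (c1 * (- (s * s - 2 * s) * (Cmod z * Cmod z)) - c1 * Cmod z / 2 * (s * Cmod z)) by (unfold A; field).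
    lra. }
  assert (0 < 3 / 2 * s - s * s) by nra.
  assert (0 < A * (3 / 2 * s - s * s)) by (apply Rmult_lt_0_compat; lra).
  lra.
Qed.

Lemma derivs_V f L D (HG : Good f L D) : derivs_on unit_disk f D.
Proof. destruct HG as [H0 [HD _]]. split; intros; auto. Qed.

Lemma degree2 f L D (HG : Good f L D) : degree2_on unit_disk (image_of f unit_disk) f.
Proof.
  intros w [z0 [Hz0 <-]]. unfold unit_disk in Hz0.
  assert (HD2 : D 2%nat (RtoC 0) <> RtoC 0) by apply HG.
  destruct (Ceq_dec z0 (RtoC 0)) as [->|Hnz].
  - exists ((RtoC 0, 2%nat) :: nil). split; [|split; [|split]].
    + simpl. constructor. simpl; tauto. constructor.
    + intros z. simpl. split.
      * intros [<-|[]]. split; auto.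
      * intros [Hz E]. left. unfold unit_disk in Hz.
        assert (Z : Cmult z z = Cmult (RtoC 0) (RtoC 0)).
        { apply (f_sq_inj f L D HG); auto. lra. rewrite Cmod_0; lra. }
        destruct (sq_eq _ _ Z) as [->| ->]; ring.
    + intros p [<-|[]]. simpl. split. lia. exists D. split; [apply (derivs_V f L D HG)|]. split; auto.
      intros j Hj. assert (j = 1%nat) by lia. subst. apply (D1_0 f L D HG).
    + reflexivity.
  - exists ((z0, 1%nat) :: (Copp z0, 1%nat) :: nil). split; [|split; [|split]].
    + simpl. constructor. simpl. intros [E|[]]. apply Hnz. apply Cmod_eq_0.
      assert (Cplus z0 z0 = RtoC 0) by (rewrite <- E at 1; ring).
      replace z0 with (Cmult (RtoC (/2)) (Cplus z0 z0)) by (destruct z0; unfold RtoC, Cmult, Cplus; simpl; f_equal; field).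
      rewrite H, Cmult_0_r. apply Cmod_0.
      constructor; [simpl; tauto|constructor].
    + intros z. simpl. split.
      * intros [<-|[<-|[]]]. split; auto. split. unfold unit_disk. rewrite Cmod_opp; auto. apply HG.
      * intros [Hz E]. destruct (sq_eq z z0 (f_sq_inj f L D HG z z0 ltac:(unfold unit_disk in Hz; lra) ltac:(lra) E)); auto.
    + intros p [<-|[<-|[]]]; simpl; (split; [lia|]); exists D; (split; [apply (derivs_V f L D HG)|]); split;
        try (intros j Hj; lia).
      * apply (D1_nz f L D HG); auto.
      * apply (D1_nz f L D HG). intros E. apply Hnz. replace z0 with (Copp (Copp z0)) by ring. rewrite E. ring.
        rewrite Cmod_opp; auto.
    + reflexivity.
Qed.

Lemma proper f L D (HG : Good f L D) : proper_on unit_disk (image_of f unit_disk) f.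
Proof.
  intros K HK HKW.
  apply (compactC_ext (fun z => Cmod (Cminus z (RtoC 0)) <= 1 /\ K (f z))).
  { intros z. replace (Cminus z (RtoC 0)) with z by ring. split.
    - intros [Hz Kz]. split; auto. unfold unit_disk. destruct (Rle_lt_or_eq_dec _ _ Hz) as [|E]; auto.
      exfalso. destruct (HKW _ Kz) as [z' [Hz' Ez']]. unfold unit_disk in Hz'.
      pose proof (f_sq_inj f L D HG z' z ltac:(lra) Hz Ez') as S.
      apply (f_equal Cmod) in S. rewrite !Cmod_mult, E in S. pose proof (Cmod_ge_0 z'). nra.
    - intros [Hz Kz]. split; auto. unfold unit_disk in Hz; lra. }
  intros I O Ho Hc.
  set (O' := fun (o : option I) x => match o with Some i => O i x | None => ~ K (f x) end).
  destruct (compact_disk (RtoC 0) 1 (option I) O') as [l Hl].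
  - intros [i|] x Hx; simpl in Hx.
    + apply Ho; auto.
    + destruct (compact_closed K HK (f x) Hx) as [e [He He']].
      destruct (f_cont f L D HG x e He) as [d [Hd Hd']].
      exists d; split; auto. intros y Hy. simpl. apply He'. apply Hd'. auto.
  - intros z Hz. destruct (classic (K (f z))) as [Kz|nKz].
    + destruct (Hc z (conj Hz Kz)) as [i Hi]. exists (Some i). exact Hi.
    + exists None. exact nKz.
  - exists (flat_map (fun o => match o with Some i => i :: nil | None => nil end) l).
    intros z [Hz Kz]. destruct (Hl z Hz) as [[i|] [Hin Hi]].
    + exists i. split; auto. apply in_flat_map. exists (Some i). split; auto. simpl; auto.
    + simpl in Hi. tauto.
Qed.

Lemma quad_like f L D (HG : Good f L D) : quadratic_like f unit_disk (image_of f unit_disk).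
Proof.
  unfold quadratic_like.
  split. { exists (RtoC 0). unfold unit_disk. rewrite Cmod_0. lra. }
  split. { exists (f (RtoC 0)). exists (RtoC 0). split; auto. unfold unit_disk. rewrite Cmod_0. lra. }
  split. { intros z Hz. unfold unit_disk in Hz. exists (1 - Cmod z). split. lra.
           intros y Hy. unfold unit_disk. pose proof (Cmod_tri3 y z (RtoC 0)).
           replace (Cminus y (RtoC 0)) with y in H by ring. replace (Cminus z (RtoC 0)) with z in H by ring. lra. }
  split. { apply (open_W f L D HG). }
  split. { apply sc_V. }
  split. { apply (sc_W f L D HG). }
  split. { apply compact_closure. }
  split. { intros z Hz. apply closure_char in Hz. apply (disk_in_W f L D HG). auto. }
  split. { intros z Hz. exists z. auto. }
  split. { intros z _. exists (D 1%nat z). apply (f_deriv f L D HG). }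
  split. { apply (proper f L D HG). }
  apply (degree2 f L D HG).
Qed.

Lemma coef_bound (f : C -> C) (d : nat -> C -> C) :
  derivs_on Cplane f d ->
  Rbar_lt (B_norm (fun z => Cminus (f z) (f0 z))) (Finite (1/4)) ->
  forall j, Cmod (Cminus (d j (RtoC 0)) (df0 j (RtoC 0))) < 1/4.
Proof.
  intros [Hd0 Hd] Hn j.
  set (dh := fun n z => Cminus (d n z) (df0 n z)).
  assert (Hdh : derivs_on Cplane (fun z => Cminus (f z) (f0 z)) dh).
  { destruct df0_derivs as [E0 E1]. split.
    - intros z Hz. unfold dh. rewrite Hd0, E0; auto.
    - intros n z Hz. unfold dh. apply Cderiv_minus; auto. }
  destruct (Lub_Rbar_correct (fun x => exists d, derivs_on Cplane (fun z => Cminus (f z) (f0 z)) d /\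
     exists j, x = Cmod (d j 0%C))) as [Hub _].
  assert (Hin : Rbar_le (Cmod (dh j (RtoC 0))) (B_norm (fun z => Cminus (f z) (f0 z)))).
  { apply Hub. exists dh. split; auto. exists j. reflexivity. }
  unfold dh in Hin.
  pose proof (Rbar_le_lt_trans _ _ _ Hin Hn) as X. simpl in X. exact X.
Qed.

Theorem lemma4p3 (f : C -> C) :
  in_B f ->
  Rbar_lt (B_norm (fun z => Cminus (f z) (f0 z))) (Finite (1/4)) ->
  quadratic_like f unit_disk (image_of f unit_disk) /\
  exists x : R, x < -1 /\ f 0%C = RtoC x.
Proof.
  intros [_ [Hconj [Heven [d [Hder _]]]]] Hn.
  pose proof (coef_bound f d Hder Hn) as CB.
  destruct Hder as [Hd0 Hd].
  assert (HD0 : forall z, d 0%nat z = f z) by (intros; apply Hd0; exact I).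
  assert (HD : forall n z, Cderiv (d n) z (d (S n) z)) by (intros; apply Hd; exact I).
  assert (A0 : Cmod (Cminus (f (RtoC 0)) (RtoC (-2))) < 1/4).
  { pose proof (CB 0%nat). rewrite df0_0, HD0 in H. exact H. }
  assert (A2k : forall k, (1 <= k)%nat -> Cmod (Cminus (d (2 * k)%nat (RtoC 0)) (RtoC 10)) < 1/4).
  { intros k Hk. destruct k as [|k]; [lia|]. pose proof (CB (2 * S k)%nat). rewrite df0_even in H. exact H. }
  assert (Hk : forall k, (1 <= k)%nat -> Cmod (d (2 * k)%nat (RtoC 0)) <= 41 / 4).
  { intros k Hk. pose proof (A2k k Hk).
    replace (d (2 * k)%nat (RtoC 0)) with (Cplus (Cminus (d (2 * k)%nat (RtoC 0)) (RtoC 10)) (RtoC 10)) by ring.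
    eapply Rle_trans; [apply Cmod_triangle|]. rewrite Cmod_R, Rabs_right by lra. lra. }
  pose proof (A2k 1%nat (le_n 1)) as A2. simpl (2 * 1)%nat in A2.
  set (L := Cmult (d 2%nat (RtoC 0)) (RtoC (/2))).
  assert (HLm : Cmod (Cminus L (RtoC 5)) < 1/8).
  { unfold L. replace (Cminus (Cmult (d 2%nat (RtoC 0)) (RtoC (/ 2))) (RtoC 5))
      with (Cmult (RtoC (/2)) (Cminus (d 2%nat (RtoC 0)) (RtoC 10))).
    rewrite Cmod_mult, Cmod_R, Rabs_right by lra. lra.
    destruct (d 2%nat (RtoC 0)). unfold RtoC, Cmult, Cminus, Cplus, Copp; simpl. f_equal; field. }
  assert (HG : Good f L d).
  { split; auto. split; auto. split; auto. split.
    - intros z1 z2 H1 H2. apply (KE f d HD0 HD Heven Hk); auto.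
    - assert (U1 : Cmod L <= Cmod (Cminus L (RtoC 5)) + 5).
      { replace L with (Cplus (Cminus L (RtoC 5)) (RtoC 5)) at 1 by ring.
        eapply Rle_trans; [apply Cmod_triangle|]. rewrite Cmod_R, Rabs_right by lra. lra. }
      assert (U2 : 5 <= Cmod L + Cmod (Cminus L (RtoC 5))).
      { assert (C5 : Cmod (RtoC 5) = 5) by (rewrite Cmod_R, Rabs_right; lra).
        pose proof (Cmod_triangle L (Copp (Cminus L (RtoC 5)))) as T. rewrite Cmod_opp in T.
        replace (Cplus L (Copp (Cminus L (RtoC 5)))) with (RtoC 5) in T by ring. lra. }
      split; [lra|]. split; [lra|]. split.
      + replace (f (RtoC 0)) with (Cplus (Cminus (f (RtoC 0)) (RtoC (-2))) (RtoC (-2))) by ring.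
        eapply Rle_trans; [apply Cmod_triangle|]. rewrite Cmod_R, Rabs_left by lra. lra.
      + intros E. rewrite E in A2. replace (Cminus (RtoC 0) (RtoC 10)) with (RtoC (-10)) in A2
          by (unfold RtoC, Cminus, Cplus, Copp; simpl; f_equal; ring).
        rewrite Cmod_R, Rabs_left in A2 by lra. lra. }
  split.
  - apply (quad_like f L d HG).
  - exists (Re (f (RtoC 0))).
    assert (Him : Im (f (RtoC 0)) = 0).
    { pose proof (Hconj (RtoC 0)) as Hc.
      replace (Cconj (RtoC 0)) with (RtoC 0) in Hc by (unfold Cconj, RtoC; simpl; f_equal; ring).
      apply (f_equal Im) in Hc. rewrite im_conj in Hc. lra. }
    split.
    + pose proof (re_le_Cmod (Cminus (f (RtoC 0)) (RtoC (-2)))) as R.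
      replace (Re (Cminus (f (RtoC 0)) (RtoC (-2)))) with (Re (f (RtoC 0)) + 2) in R
        by (destruct (f (RtoC 0)); simpl; ring).
      unfold Rabs in R. destruct Rcase_abs in R; lra.
    + destruct (f (RtoC 0)) as [a b]. simpl in Him. subst b. reflexivity.
Qed.
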